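(* Let $P$ be a program and $SQ$ a stack-queue scheduling rule. Let $A,B,C,D$ be p-goals and $\underline{\pi}$ a shifting such that both $A|B|C|D$ and $A|B|C|B\underline{\pi}|D$ are defined (concatenations). If there is a p-SLD derivation $A|B|C|D\xrightarrow{SQ,X.P}Q$, then there exist a template $Y$ and a p-SLD derivation $A|B|C|B\underline{\pi}|D\xrightarrow{SQ,Y.P}R$ with $X\subseteq_L Y$ and $\#Q\le\#R$.
   Context: A p-atom is a pair $a[p]$ of an atom $a$ and a rational priority $p$. A p-goal is a finite set of p-atoms with pairwise distinct priorities, regarded as a list ordered by increasing priority; $\#G$ is its number of p-atoms. Substitutions act on atoms and leave priorities unchanged. A clause is $h\leftarrow B$ with $h$ an atom and $B$ a p-goal; a program is a finite set of clauses. For p-goals with no common priority, $F+G=F\cup G$; $F|G$ denotes $F+G$ when all priorities of $F$ are smaller than those of $G$. A shifting $\underline{\pi}$ is a strictly increasing bijection $\mathbb{Q}\to\mathbb{Q}$; $G\underline\pi$ replaces each priority $p$ by $\underline\pi(p)$. Priority derivation step: for a p-goal $a|F$ ($a$ of least priority), clause $c=(h\leftarrow B)$, renaming $\xi$ with $var(a|F)\cap var(c\xi)=\emptyset$, idempotent relevant mgu $\theta$ of $a$ and $h\xi$, shifting $\underline{\pi}$ with $F$, $B\xi\underline{\pi}$ sharing no priority: $a|F\xrightarrow{c\xi,\theta}(F+B\xi\underline{\pi})\theta$. A p-SLD derivation is a sequence of such steps with each renamed clause $c_j\xi_j$ variable-disjoint from the initial goal and all earlier renamed clauses; its template is the sequence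 of applied clauses. For templates, $X\subseteq_L Y$ means $X$ is a subsequence of $Y$. $G\xrightarrow{S,M.P}R$ denotes a p-SLD derivation with template $M$, all clauses in $P$, all steps in $S$. Lowering: for $c=(h\leftarrow B)$, a step $a\lambda\underline{\sigma}|(K\lambda\underline{\sigma}+X)\xrightarrow{c}(X+K\lambda\underline{\sigma}+B\xi''\underline{\theta}'')\alpha''$ is a lowering by $X$ of $a|K\xrightarrow{c}(K+B\xi'\underline{\theta}')\alpha'$; a congruent lowering if some shifting $\underline{\rho}$ has $K\underline{\rho}=K\underline{\sigma}$ and $B\underline{\theta}'\underline{\rho}=B\underline{\theta}''$. Steps are congruent lowerings of each other if each is a congruent lowering of the other. A set $S$ of steps is complete if (i) whenever some step $G\xrightarrow{c}\cdot$ exists, some step $G\xrightarrow{c}\cdot$ lies in $S$, and (ii) $S$ contains every step that is a congruent lowering of each other with a step of $S$. Stack-queue scheduling rule: a complete set $SQ$ of priority derivation steps such that for every clause $c=(h\leftarrow B)$ there are p-goals $M_s,M_q$ with $B=M_s|M_q$ such that every step $a|K\xrightarrow{c\xi,\mu}R$ in $SQ$ satisfies $R=(M_s\xi\underline{\gamma}|K|M_q\xi\underline{\gamma})\mu$ for some shifting $\underline{\gamma}$. *)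

(* Defs.v *)
From Stdlib Require List.
From mathcomp Require Import all_boot all_order all_algebra.
Set Implicit Arguments. Unset Strict Implicit. Unset Printing Implicit Defensive.
Import Order.TTheory GRing.Theory Num.Theory.
Local Open Scope ring_scope.

(* Variables are natural numbers; function and predicate symbols are natural
   numbers (a generic countable signature; arities are not fixed). *)
Inductive term : Type :=
| Var of nat
| Fun of nat & seq term.

Inductive atom : Type := Atom of nat & seq term.

Definition subst := nat -> term.

Fixpoint tsubst (s : subst) (t : term) : term :=
  match t with
  | Var x => s x
  | Fun f ts => Fun f (map (tsubst s) ts)
  end.

Definition asubst (s : subst) (a : atom) : atom :=
  let: Atom p ts := a in Atom p (map (tsubst s) ts).

Fixpoint tvars (t : term) : seq nat :=
  match t with
  | Var x => [:: x]
  | Fun _ ts => flatten (map tvars ts)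
  end.

Definition avars (a : atom) : seq nat :=
  let: Atom _ ts := a in flatten (map tvars ts).

Definition renaming (xi : subst) : Prop :=
  exists f : nat -> nat, [/\ bijective f,
    (exists s : seq nat, forall x, x \notin s -> f x = x) &
    forall x, xi x = Var (f x)].

Definition unifier (th : subst) (a b : atom) : Prop := asubst th a = asubst th b.

Definition idem_relevant_mgu (th : subst) (a b : atom) : Prop :=
  [/\ unifier th a b,
      (forall eta, unifier eta a b ->
         exists delta : subst, forall x, tsubst delta (th x) = eta x),
      (forall x, tsubst th (th x) = th x) &
      (forall x, th x <> Var x ->
         (x \in avars a ++ avars b) /\
         (forall y, y \in tvars (th x) -> y \in avars a ++ avars b))].

(* A p-goal is represented as the list of its p-atoms ordered by strictly
   increasing priority (so priorities are pairwise distinct). *)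
Definition patom := (atom * rat)%type.
Definition pgoal := seq patom.

Definition is_pgoal (G : pgoal) : bool := sorted (fun x y : patom => x.2 < y.2) G.

Definition prios (G : pgoal) : seq rat := map snd G.

Definition gvars (G : pgoal) : seq nat := flatten (map (fun p : patom => avars p.1) G).

Definition gsubst (s : subst) (G : pgoal) : pgoal :=
  map (fun p : patom => (asubst s p.1, p.2)) G.

Definition shifting (pi : rat -> rat) : Prop :=
  {homo pi : x y / x < y} /\ bijective pi.

Definition gshift (pi : rat -> rat) (G : pgoal) : pgoal :=
  map (fun p : patom => (p.1, pi p.2)) G.

Definition no_common_prio (F G : pgoal) : Prop :=
  forall p, p \in prios F -> p \in prios G -> False.

Definition pplus (F G : pgoal) : pgoal :=
  sort (fun x y : patom => x.2 <= y.2) (F ++ G).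

Record clause := Clause { chead : atom; cbody : pgoal }.

Definition is_clause (c : clause) : Prop := is_pgoal (cbody c).

Definition cvars (c : clause) : seq nat := avars (chead c) ++ gvars (cbody c).

Definition crename (xi : subst) (c : clause) : clause :=
  Clause (asubst xi (chead c)) (gsubst xi (cbody c)).

Definition disjoint_vars (s1 s2 : seq nat) : Prop :=
  forall x, x \in s1 -> x \in s2 -> False.

(* A step  a|F --(c xi, theta)--> (F + B xi pi) theta  together with its data. *)
Record pstep := PStep {
  st_goal : pgoal;
  st_clause : clause;
  st_ren : subst;
  st_mgu : subst;
  st_shift : rat -> rat;
  st_res : pgoal }.

Definition is_step (s : pstep) : Prop :=
  match st_goal s with
  | [::] => False
  | a :: F =>
      let c := st_clause s in
      let xi := st_ren s in
      let Bxipi := gshift (st_shift s) (gsubst xi (cbody c)) in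
      is_pgoal (st_goal s) /\ is_clause c /\ renaming xi /\
      disjoint_vars (gvars (st_goal s)) (cvars (crename xi c)) /\
      idem_relevant_mgu (st_mgu s) a.1 (asubst xi (chead c)) /\
      shifting (st_shift s) /\
      no_common_prio F Bxipi /\
      st_res s = gsubst (st_mgu s) (pplus F Bxipi)
  end.

Fixpoint chain (G : pgoal) (ds : seq pstep) (R : pgoal) : Prop :=
  match ds with
  | [::] => G = R
  | s :: ds' => st_goal s = G /\ chain (st_res s) ds' R
  end.

Definition rcvars (s : pstep) : seq nat := cvars (crename (st_ren s) (st_clause s)).

Fixpoint apart (used : seq nat) (ds : seq pstep) : Prop :=
  match ds with
  | [::] => True
  | s :: ds' => disjoint_vars (rcvars s) used /\ apart (used ++ rcvars s) ds'
  end.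

Definition pderiv (S : pstep -> Prop) (P : seq clause) (G : pgoal)
    (M : seq clause) (R : pgoal) : Prop :=
  exists ds : seq pstep,
    chain G ds R /\ map st_clause ds = M /\
    (forall s, List.In s ds -> is_step s) /\
    (forall s, List.In s ds -> S s) /\
    (forall s, List.In s ds -> List.In (st_clause s) P) /\
    apart (gvars G) ds.

Definition subseqL (T : Type) (X Y : seq T) : Prop := exists m : bitseq, X = mask m Y.

Definition lgoal (lam : subst) (sig : rat -> rat) (G : pgoal) : pgoal :=
  gshift sig (gsubst lam G).

Definition lowering_data (X : pgoal) (lam : subst) (sig : rat -> rat)
    (s2 s1 : pstep) : Prop :=
  exists a K, is_step s1 /\ is_step s2 /\ st_goal s1 = a :: K /\
    st_clause s2 = st_clause s1 /\ shifting sig /\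
    no_common_prio (lgoal lam sig K) X /\
    st_goal s2 = (asubst lam a.1, sig a.2) :: pplus (lgoal lam sig K) X.

Definition lowering (X : pgoal) (s2 s1 : pstep) : Prop :=
  exists lam sig, lowering_data X lam sig s2 s1.

Definition congruent_lowering (s2 s1 : pstep) : Prop :=
  exists X lam sig, lowering_data X lam sig s2 s1 /\
    exists a K, st_goal s1 = a :: K /\
    exists rho, [/\ shifting rho,
      gshift rho K = gshift sig K &
      gshift rho (gshift (st_shift s1) (cbody (st_clause s1)))
        = gshift (st_shift s2) (cbody (st_clause s1))].

Definition mutual_congruent_lowering (s1 s2 : pstep) : Prop :=
  congruent_lowering s1 s2 /\ congruent_lowering s2 s1.

Definition complete (S : pstep -> Prop) : Prop :=
  [/\ (forall s, S s -> is_step s),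
      (forall G c, (exists s, [/\ is_step s, st_goal s = G & st_clause s = c]) ->
         exists s, [/\ S s, is_step s, st_goal s = G & st_clause s = c]) &
      (forall s s', S s -> is_step s' -> mutual_congruent_lowering s' s -> S s')].

Definition stack_queue (SQ : pstep -> Prop) : Prop :=
  complete SQ /\
  forall c : clause, is_clause c ->
    exists Ms Mq : pgoal,
      [/\ is_pgoal (Ms ++ Mq), cbody c = Ms ++ Mq &
      forall s, SQ s -> st_clause s = c ->
        exists a K, st_goal s = a :: K /\
        exists gam, [/\ shifting gam,
          is_pgoal (gshift gam (gsubst (st_ren s) Ms) ++ K
                    ++ gshift gam (gsubst (st_ren s) Mq)) &
          st_res s = gsubst (st_mgu s)
             (gshift gam (gsubst (st_ren s) Ms) ++ K
              ++ gshift gam (gsubst (st_ren s) Mq))]].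

(* Main.v *)
Require Import Defs.
From Stdlib Require List.
From Stdlib Require Import Classical ClassicalEpsilon.
From mathcomp Require Import all_boot all_order all_algebra.
From mathcomp Require Import zify ring lra.
Set Implicit Arguments. Unset Strict Implicit. Unset Printing Implicit Defensive.
Import Order.TTheory GRing.Theory Num.Theory.
Section TermInd.
Variable Pt : term -> Prop.
Hypothesis HV : forall x, Pt (Var x).
Hypothesis HF : forall f ts, List.Forall Pt ts -> Pt (Fun f ts).
Fixpoint term_ind2 (t : term) : Pt t :=
  match t with
  | Var x => HV x
  | Fun f ts => HF f ((fix go (l : seq term) : List.Forall Pt l :=
       match l with
       | [::] => List.Forall_nil _
       | u :: l' => List.Forall_cons _ (term_ind2 u) (go l')
       end) ts)
  end.
End TermInd.

Lemma ForallP (T : Type) (Pt : T -> Prop) (l : seq T) :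
  List.Forall Pt l -> forall x, List.In x l -> Pt x.
Proof. by move/List.Forall_forall. Qed.

Lemma tsubst_comp s1 s2 t :
  tsubst s2 (tsubst s1 t) = tsubst (fun x => tsubst s2 (s1 x)) t.
Proof.
elim/term_ind2: t => [x|f ts IH] //=; congr Fun; rewrite -map_comp.
elim: ts IH => [|u ts IHts] //= /List.Forall_cons_iff [H1 H2].
by rewrite H1 IHts.
Qed.

Lemma tsubst_id t : tsubst Var t = t.
Proof.
elim/term_ind2: t => [x|f ts IH] //=; congr Fun.
elim: ts IH => [|u ts IHts] //= /List.Forall_cons_iff [H1 H2].
by rewrite H1 IHts.
Qed.

Lemma tsubst_ext s1 s2 t :
  (forall x, x \in tvars t -> s1 x = s2 x) -> tsubst s1 t = tsubst s2 t.
Proof.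
elim/term_ind2: t => [x|f ts IH] /= H; first by apply: H; rewrite inE.
congr Fun; elim: ts IH H => [|u ts IHts] //= /List.Forall_cons_iff [H1 H2] H.
rewrite H1 ?IHts // => x Hx; apply: H; rewrite mem_cat Hx ?orbT //.
Qed.

Lemma tsubst_ext_inv s1 s2 t :
  tsubst s1 t = tsubst s2 t -> forall x, x \in tvars t -> s1 x = s2 x.
Proof.
elim/term_ind2: t => [y|f ts IH] /=; first by move=> H x; rewrite inE => /eqP ->.
move=> [] H x.
elim: ts IH H => [|u ts IHts] //= /List.Forall_cons_iff [H1 H2] [] Hu Hts.
by rewrite mem_cat => /orP [/H1 | ]; [apply | apply: IHts].
Qed.

Lemma tvars_subst s t y :
  y \in tvars (tsubst s t) -> exists2 x, x \in tvars t & y \in tvars (s x).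
Proof.
elim/term_ind2: t => [x|f ts IH] /=; first by exists x; rewrite ?inE.
elim: ts IH => [|u ts IHts] //= /List.Forall_cons_iff [H1 H2].
rewrite mem_cat => /orP [/H1 [x Hx Hy] | /(IHts H2) [x Hx Hy]];
  exists x => //; rewrite mem_cat Hx ?orbT //.
Qed.

Lemma tvars_subst2 s t x y :
  x \in tvars t -> y \in tvars (s x) -> y \in tvars (tsubst s t).
Proof.
elim/term_ind2: t => [z|f ts IH] /=; first by rewrite inE => /eqP ->.
elim: ts IH => [|u ts IHts] //= /List.Forall_cons_iff [H1 H2].
rewrite !mem_cat => /orP [Hx Hy | Hx Hy]; first by rewrite (H1 Hx Hy).
by rewrite (IHts H2 Hx Hy) orbT.
Qed.

Lemma asubst_comp s1 s2 a :
  asubst s2 (asubst s1 a) = asubst (fun x => tsubst s2 (s1 x)) a.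
Proof. case: a => p ts /=; rewrite -map_comp; congr Atom; apply: eq_map => t; exact: tsubst_comp. Qed.

Lemma asubst_id a : asubst Var a = a.
Proof. case: a => p ts /=; congr Atom; elim: ts => //= t ts ->; by rewrite tsubst_id. Qed.

Lemma flatten_map_mem (T : Type) (f : T -> seq nat) (l : seq T) y :
  y \in flatten (map f l) -> exists2 t, List.In t l & y \in f t.
Proof.
elim: l => //= t l IH; rewrite mem_cat => /orP [H|/IH [u Hu Hy]].
  by exists t; [left|].
by exists u; [right|].
Qed.

Lemma flatten_map_mem2 (T : Type) (f : T -> seq nat) (l : seq T) y t :
  List.In t l -> y \in f t -> y \in flatten (map f l).
Proof.
elim: l => //= u l IH [->|Hin] Hy; rewrite mem_cat ?Hy //.
by rewrite (IH Hin Hy) orbT.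
Qed.

Lemma asubst_ext s1 s2 a :
  (forall x, x \in avars a -> s1 x = s2 x) -> asubst s1 a = asubst s2 a.
Proof.
case: a => p ts /= H; congr Atom.
elim: ts H => //= t ts IH H; rewrite (tsubst_ext (s2:=s2)) ?IH // => x Hx; apply: H;
  rewrite mem_cat Hx ?orbT //.
Qed.

Lemma asubst_ext_inv s1 s2 a :
  asubst s1 a = asubst s2 a -> forall x, x \in avars a -> s1 x = s2 x.
Proof.
case: a => p ts /= [] H x; elim: ts H => //= t ts IH [] H1 H2.
rewrite mem_cat => /orP [|]; [exact: tsubst_ext_inv | exact: IH].
Qed.

Lemma avars_subst s a y :
  y \in avars (asubst s a) -> exists2 x, x \in avars a & y \in tvars (s x).
Proof.
case: a => p ts /=; elim: ts => //= t ts IH; rewrite mem_cat => /orP [/tvars_subst [x Hx Hy]|/IH [x Hx Hy]];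
  exists x => //; rewrite mem_cat Hx ?orbT //.
Qed.

Lemma avars_subst2 s a x y :
  x \in avars a -> y \in tvars (s x) -> y \in avars (asubst s a).
Proof.
case: a => p ts /=; elim: ts => //= t ts IH; rewrite !mem_cat => /orP [Hx Hy|Hx Hy].
  by rewrite (tvars_subst2 Hx Hy).
by rewrite IH ?orbT.
Qed.
Definition unif (s : subst) (E : seq (term * term)) : Prop :=
  List.Forall (fun e => tsubst s e.1 = tsubst s e.2) E.
Definition evars (E : seq (term * term)) : seq nat :=
  flatten (map (fun e => tvars e.1 ++ tvars e.2) E).
Fixpoint tsize t := match t with Var _ => 1 | Fun _ ts => (sumn (map tsize ts)).+1 end.
Definition esize (E : seq (term * term)) := sumn (map (fun e => tsize e.1 + tsize e.2) E).

Definition good (V : pred nat) (s : subst) (E : seq (term * term)) : Prop :=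
  [/\ unif s E, (forall eta, unif eta E -> forall x, tsubst eta (s x) = eta x) &
      (forall x, s x <> Var x -> V x /\ forall y, y \in tvars (s x) -> V y)].

Lemma tsize_gt0 t : 0 < tsize t. Proof. by case: t. Qed.

Lemma occurs_le s x t : x \in tvars t -> tsize (s x) <= tsize (tsubst s t).
Proof.
elim/term_ind2: t => [y|f ts IH] /=; first by rewrite inE => /eqP ->.
move=> Hx; apply: leqW; elim: ts IH Hx => //= u ts IHts /List.Forall_cons_iff [H1 H2].
rewrite mem_cat => /orP [/H1 H | /(IHts H2) H]; first exact: leq_trans H (leq_addr _ _).
exact: leq_trans H (leq_addl _ _).
Qed.

Lemma occurs_lt s x t : x \in tvars t -> t <> Var x -> tsize (s x) < tsize (tsubst s t).
Proof.
case: t => [y|f ts] /=; first by rewrite inE => /eqP ->.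
move=> Hx _; rewrite ltnS; elim: ts Hx => //= u ts IHts.
rewrite mem_cat => /orP [/(occurs_le s) H | /IHts H]; first exact: leq_trans H (leq_addr _ _).
exact: leq_trans H (leq_addl _ _).
Qed.

Lemma good_V (V V' : pred nat) s E : (forall x, V x -> V' x) -> good V s E -> good V' s E.
Proof. move=> HV [H1 H2 H3]; split=> // x /H3 [] /HV ? H; split=> // y /H; exact: HV. Qed.

Lemma unif_cons s l r E : unif s ((l, r) :: E) <-> tsubst s l = tsubst s r /\ unif s E.
Proof. by split => [/List.Forall_cons_iff | [H1 H2]]; [|constructor]. Qed.

Lemma good_swap V s l r E : good V s ((l, r) :: E) -> good V s ((r, l) :: E).
Proof.
move=> [/unif_cons [H1 H1'] H2 H3]; split=> //.
- by apply/unif_cons; split => //; rewrite H1.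
- move=> eta /unif_cons [Ha Hb]; apply: H2; apply/unif_cons; split => //; by rewrite Ha.
Qed.

Lemma evars_swap l r E x : (x \in evars ((l, r) :: E)) = (x \in evars ((r, l) :: E)).
Proof. rewrite /evars /= !mem_cat; by case: (x \in tvars l); case: (x \in tvars r). Qed.

Lemma undup_size_le (s1 s2 : seq nat) : {subset s1 <= s2} -> size (undup s1) <= size (undup s2).
Proof.
move=> H; apply: uniq_leq_size; first exact: undup_uniq.
by move=> y; rewrite !mem_undup; apply: H.
Qed.

Lemma undup_size_lt (s1 s2 : seq nat) x : {subset s1 <= s2} -> x \notin s1 -> x \in s2 ->
  size (undup s1) < size (undup s2).
Proof.
move=> H Hx Hx2; have: size (x :: undup s1) <= size (undup s2).
  apply: uniq_leq_size; first by rewrite /= mem_undup Hx undup_uniq.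
  by move=> y; rewrite inE mem_undup => /orP [/eqP ->|/H]; rewrite mem_undup.
by [].
Qed.

Definition s1of (x : nat) (r : term) : subst := fun y => if y == x then r else Var y.

Lemma unif_tsubst_s1 eta x r t : eta x = tsubst eta r ->
  tsubst eta (tsubst (s1of x r) t) = tsubst eta t.
Proof.
move=> H; rewrite tsubst_comp; apply: tsubst_ext => y _; rewrite /s1of.
by case: eqP => [->|].
Qed.

Lemma s1_notin x r t : x \notin tvars r -> forall y, y \in tvars (tsubst (s1of x r) t) ->
  y != x /\ (y \in tvars t \/ y \in tvars r).
Proof.
move=> Hx y /tvars_subst [z Hz]; rewrite /s1of; case: eqP => [Ezx Hy|Hzx].
  rewrite Ezx in Hz.
  by split; [apply/eqP => E; move: Hx; rewrite -E Hy | right].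
rewrite /= inE => /eqP E; rewrite E; split; last by left.
by apply/eqP.
Qed.
Lemma unifP s E : unif s E <-> forall e, List.In e E -> tsubst s e.1 = tsubst s e.2.
Proof. exact: List.Forall_forall. Qed.

Lemma evarsP E y : y \in evars E -> exists2 e, List.In e E & (y \in tvars e.1) || (y \in tvars e.2).
Proof. by move/flatten_map_mem => [e He Hy]; exists e => //; rewrite -mem_cat. Qed.

Lemma evarsP2 E y e : List.In e E -> (y \in tvars e.1) || (y \in tvars e.2) -> y \in evars E.
Proof. by move=> He Hy; apply: (flatten_map_mem2 He); rewrite mem_cat. Qed.

Lemma tsubst_notin x r t : x \notin tvars t -> tsubst (s1of x r) t = t.
Proof.
move=> H; rewrite -[RHS]tsubst_id; apply: tsubst_ext => y Hy; rewrite /s1of.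
by case: eqP => // E; move: H; rewrite -E Hy.
Qed.

Lemma elim_case x r E :
  r <> Var x ->
  (forall E', size (undup (evars E')) < size (undup (evars ((Var x, r) :: E))) -> (exists eta, unif eta E') ->
     exists s, good (fun y => y \in evars E') s E') ->
  (exists eta, unif eta ((Var x, r) :: E)) ->
  exists s, good (fun y => y \in evars ((Var x, r) :: E)) s ((Var x, r) :: E).
Proof.
move=> Hr IHk [eta /unif_cons [/= Hx Heta]].
have xr : x \notin tvars r.
  apply/negP => Hin; have := occurs_lt eta Hin Hr; by rewrite Hx ltnn.
set V := evars ((Var x, r) :: E).
set E'' := map (fun e => (tsubst (s1of x r) e.1, tsubst (s1of x r) e.2)) E.
have HE'' : forall y, y \in evars E'' -> y != x /\ y \in V.
  move=> y /evarsP [e' /List.in_map_iff [e [<- He]]] /= /orP [] /(s1_notin xr) [Hyx H];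
    split => //; (case: H => H; [apply: (evarsP2 (e := e)); [by right| by rewrite H ?orbT]
                          |apply: (evarsP2 (e := (Var x, r))); [by left | by rewrite /= H orbT]]).
have unifE'' : forall s, (forall y, s y = tsubst s (s1of x r y)) -> unif s E -> unif s E''.
  move=> s Hs /unifP H; apply/unifP => e' /List.in_map_iff [e [<- He]] /=.
  rewrite !tsubst_comp -!(@tsubst_ext s) ?H // => y _; by rewrite Hs.
have [s' [Hs'1 Hs'2 Hs'3]] : exists s', good (fun y => y \in evars E'') s' E''.
  apply: IHk; last first.
    exists eta; apply: unifE'' => // y; rewrite /s1of; by case: eqP => [->|].
  apply: (@undup_size_lt _ _ x).
  - by move=> y /HE'' [].
  - by apply/negP => /HE'' [] /eqP.
  - by apply: (evarsP2 (e := (Var x, r))); [left | rewrite /= inE eqxx].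
set s := fun y => tsubst s' (s1of x r y).
have sx : s x = tsubst s' r by rewrite /s /s1of eqxx.
have sr : tsubst s r = tsubst s' r.
  by rewrite /s -tsubst_comp tsubst_notin.
exists s; split.
- apply/unif_cons; split; first by rewrite /= sx sr.
  apply/unifP => e He; rewrite /s -!tsubst_comp.
  by move/unifP: Hs'1 => /(_ (tsubst (s1of x r) e.1, tsubst (s1of x r) e.2)); apply; apply/List.in_map_iff; exists e.
- move=> eta' /unif_cons [/= Hx' Hu] y.
  have H1 : unif eta' E'' by apply: unifE'' => // z; rewrite /s1of; case: eqP => [->|].
  rewrite /s tsubst_comp -(@tsubst_ext eta') => [|z _]; last by rewrite Hs'2.
  by rewrite /s1of; case: eqP => [->|].
- move=> y; rewrite /s /s1of; case: eqP => [-> _|Hyx Hy].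
    split; first by apply: (evarsP2 (e := (Var x, r))); [left | rewrite /= inE eqxx].
    move=> z /tvars_subst [w Hw Hz].
    case: (classic (s' w = Var w)) => Ew.
      move: Hz; rewrite Ew inE => /eqP ->.
      by apply: (evarsP2 (e := (Var x, r))); [left | rewrite /= Hw orbT].
    by have [_ /(_ z Hz) /HE'' []] := Hs'3 w Ew.
  have [/HE'' [_ ?] H] := Hs'3 y Hy; split => // z /H /HE'' []; done.
Qed.
Lemma unif_cat s E1 E2 : unif s (E1 ++ E2) <-> unif s E1 /\ unif s E2.
Proof. exact: List.Forall_app. Qed.

Lemma zip_unif s f ts us : size ts = size us ->
  (tsubst s (Fun f ts) = tsubst s (Fun f us) <-> unif s (zip ts us)).
Proof.
move=> /= Hs; split.
  move=> H0; have : map (tsubst s) ts = map (tsubst s) us by case: H0.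
  move: H0 => _ H; elim: ts us Hs H => [|t ts IH] [|u us] //= Hs H; first by constructor.
  have Hs' : size ts = size us by case: Hs.
  case: H => H1 H2.
  by apply/unif_cons; split; [|apply: IH Hs' H2].
move=> H; congr Fun; elim: ts us Hs H => [|t ts IH] [|u us] //= Hs /unif_cons [H1 H2].
have Hs' : size ts = size us by case: Hs.
by rewrite H1 (IH us Hs').
Qed.

Lemma zip_evars ts us y : size ts = size us ->
  (y \in evars (zip ts us)) = (y \in flatten (map tvars ts)) || (y \in flatten (map tvars us)).
Proof.
elim: ts us => [|t ts IH] [|u us] //= [] Hs; rewrite /evars /= -/(evars _) !mem_cat IH //.
by case: (y \in tvars t); case: (y \in tvars u); case: (y \in flatten _); case: (y \in flatten _).
Qed.

Lemma zip_esize ts us : size ts = size us ->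
  esize (zip ts us) = sumn (map tsize ts) + sumn (map tsize us).
Proof.
elim: ts us => [|t ts IH] [|u us] //= [] Hs; rewrite /esize /= -/(esize _) IH //.
by rewrite !addnA (addnAC (tsize t)).
Qed.

Lemma good_nil : good (fun y => y \in evars [::]) Var [::].
Proof. split => // [eta _ x|x]; by []. Qed.

Lemma unify_inner k :
  (forall E', size (undup (evars E')) < k -> (exists eta, unif eta E') ->
     exists s, good (fun y => y \in evars E') s E') ->
  forall m E, size (undup (evars E)) <= k -> esize E <= m -> (exists eta, unif eta E) ->
     exists s, good (fun y => y \in evars E) s E.
Proof.
move=> IHk; elim => [|m IHm] [|[l r] E] Hk Hm Hu; try by exists Var; exact: good_nil.
  by move: Hm; rewrite /esize /= leqn0 !addn_eq0; case: (l).
have IHk' : forall E', size (undup (evars E')) < size (undup (evars ((l, r) :: E))) -> (exists eta, unif eta E') ->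
     exists s, good (fun y => y \in evars E') s E'.
  by move=> E' H; apply: IHk; apply: leq_trans Hk.
have HmE : esize E <= m.
  move: Hm; rewrite /esize /= -/(esize _) => H.
  have := tsize_gt0 l; have := tsize_gt0 r; lia.
have subE : {subset evars E <= evars ((l, r) :: E)}.
  by move=> y; rewrite /evars /= mem_cat orbC => ->.
case: l Hk Hm Hu IHk' subE => [x|f ts]; case: r => [y|g us] Hk Hm Hu IHk' subE.
- case: (eqVneq x y) => [Exy|Hxy]; first subst y; last by apply: elim_case => // -[] /eqP; rewrite eq_sym (negPf Hxy).
  have [s [H1 H2 H3]] := IHm E (leq_trans (undup_size_le subE) Hk) HmE
     (let: ex_intro eta He := Hu in ex_intro _ eta (proj2 (proj1 (unif_cons _ _ _ _) He))).
  exists s; split.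
  + by apply/unif_cons.
  + by move=> eta /unif_cons [_ ?]; apply: H2.
  + move=> z /H3 [/= Hz Hz']; split; first by apply: subE.
    by move=> w /Hz' /= Hw; apply: subE.
- by apply: elim_case.
- have [s Hs] : exists s, good (fun z => z \in evars ((Var y, Fun f ts) :: E)) s ((Var y, Fun f ts) :: E).
    apply: elim_case => //.
      move=> E' HE'; apply: IHk'; apply: (leq_trans HE'); apply: undup_size_le => z.
      by rewrite evars_swap.
    case: Hu => eta /unif_cons [H1 H2]; exists eta; apply/unif_cons; split => //.
  by exists s; apply: (good_V (V := fun z => z \in evars ((Var y, Fun f ts) :: E))) => [z|]; [rewrite evars_swap | apply: good_swap].
- case: Hu => eta /unif_cons [/= [] Hfg Hmap Heta]; subst g.
  have Hsz : size ts = size us by rewrite -(size_map (tsubst eta) ts) Hmap size_map.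
  have Hmem : forall z, (z \in evars (zip ts us ++ E)) = (z \in evars ((Fun f ts, Fun f us) :: E)).
    by move=> z; rewrite /evars map_cat flatten_cat -/(evars _) -/(evars _) mem_cat zip_evars // /evars /= !mem_cat -!orbA.
  have Hun : forall sg, unif sg (zip ts us ++ E) <-> unif sg ((Fun f ts, Fun f us) :: E).
    move=> sg; split => [/unif_cat [H1 H2]|/unif_cons [H1 H2]].
      by apply/unif_cons; split => //; exact: (proj2 (zip_unif _ _ Hsz) H1).
    by apply/unif_cat; split => //; exact: (proj1 (zip_unif _ _ Hsz) H1).
  have [sg Hs] : exists sg, good (fun z => z \in evars (zip ts us ++ E)) sg (zip ts us ++ E).
    apply: IHm.
    + by apply: leq_trans Hk; apply: undup_size_le => z; rewrite Hmem.
    + move: Hm; rewrite /esize map_cat sumn_cat -/(esize _) -/(esize _) zip_esize // /esize /= -/(esize _) => H.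
      lia.
    + by exists eta; apply/Hun/unif_cons; split => //=; rewrite Hmap.
  case: Hs => [H1 H2 H3]; exists sg; split.
  + exact/Hun.
  + by move=> eta' /Hun; apply: H2.
  + by move=> z /H3 [Hz Hz']; rewrite -Hmem; split => // w /Hz'; rewrite Hmem.
Qed.
Lemma unify_main E : (exists eta, unif eta E) -> exists s, good (fun y => y \in evars E) s E.
Proof.
suff H : forall k E, size (undup (evars E)) <= k -> (exists eta, unif eta E) ->
   exists s, good (fun y => y \in evars E) s E by apply: H.
elim => [|k IHk] E0 Hk.
  by apply: (unify_inner (k := 0) _ (m := esize E0)).
apply: (unify_inner (k := k.+1) _ (m := esize E0)) => // E' HE'; apply: IHk.
Qed.

Lemma mgu_exists a b eta : asubst eta a = asubst eta b -> exists th, idem_relevant_mgu th a b.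
Proof.
case: a b => p ts [q us] /= [] Hpq Hmap; subst q.
have Hsz : size ts = size us by rewrite -(size_map (tsubst eta) ts) Hmap size_map.
have [s [H1 H2 H3]] : exists s, good (fun y => y \in evars (zip ts us)) s (zip ts us).
  apply: unify_main; exists eta; apply: (proj1 (zip_unif eta p Hsz)) => /=; by rewrite Hmap.
have Hu : unifier s (Atom p ts) (Atom p us).
  rewrite /unifier /=; have := proj2 (zip_unif s p Hsz) H1; by case=> ->.
have Hm : forall eta', unifier eta' (Atom p ts) (Atom p us) -> forall x, tsubst eta' (s x) = eta' x.
  move=> eta' He; apply: H2; apply: (proj1 (zip_unif eta' p Hsz)); rewrite /=; by case: He => ->.
exists s; split => //.
- by move=> eta' /Hm H; exists eta'.
- by move=> x; apply: Hm.
- move=> x /H3 [Hx Hy]; rewrite /= mem_cat -zip_evars //; split => // y /Hy; by rewrite mem_cat -zip_evars.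
Qed.
Lemma gsubst_fst s (G : pgoal) : map fst (gsubst s G) = map (asubst s) (map fst G).
Proof. by rewrite /gsubst -!map_comp. Qed.
Lemma gshift_fst g (G : pgoal) : map fst (gshift g G) = map fst G.
Proof. by rewrite /gshift -map_comp. Qed.
Lemma prios_gsubst s G : prios (gsubst s G) = prios G.
Proof. by rewrite /prios /gsubst -map_comp. Qed.
Lemma prios_gshift g G : prios (gshift g G) = map g (prios G).
Proof. by rewrite /prios /gshift -!map_comp. Qed.
Lemma size_gsubst s G : size (gsubst s G) = size G. Proof. by rewrite size_map. Qed.

Lemma is_pgoal_gsubst s G : is_pgoal (gsubst s G) = is_pgoal G.
Proof.
rewrite /is_pgoal /gsubst sorted_map; apply/idP/idP; apply: sub_sorted; by move=> x y.
Qed.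

Lemma gsubst_id G : gsubst Var G = G.
Proof. rewrite /gsubst -[RHS]map_id; apply: eq_map => -[a p] /=; by rewrite asubst_id. Qed.
Lemma gshift_id G : gshift id G = G.
Proof. rewrite /gshift -[RHS]map_id; by apply: eq_map => -[a p]. Qed.

Lemma pplus_nil K : is_pgoal K -> pplus K [::] = K.
Proof.
move=> H; rewrite /pplus cats0 sorted_sort //.
  by move=> x y z /= ; apply: le_trans.
by apply: sub_sorted H => x y /ltW.
Qed.

Lemma shifting_id : shifting id.
Proof. by split => //; exists id. Qed.

Lemma shifting_tr (t : rat) : shifting (fun q => q + t)%R.
Proof.
split; first by move=> x y /=; rewrite ltrD2r.
by exists (fun q => q - t)%R => q /=; rewrite ?addrK ?subrK.
Qed.

Definition mxa (s : seq rat) : rat := foldr (fun x acc => Num.max `|x| acc)%R 0%R s.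
Lemma mxa_ge0 s : (0 <= mxa s)%R.
Proof. elim: s => //= x s IH; by rewrite le_max IH orbT. Qed.
Lemma mxa_ge s x : x \in s -> (`|x| <= mxa s)%R.
Proof.
elim: s => //= y s IH; rewrite inE => /orP [/eqP ->|/IH H]; rewrite le_max ?lexx //.
by rewrite H orbT.
Qed.

Lemma tr_nocommon (K G : pgoal) :
  no_common_prio K (gshift (fun q => q + (mxa (prios K) + mxa (prios G) + 1))%R G).
Proof.
move=> p Hp; rewrite prios_gshift => /mapP [q Hq Ep].
have h1 := mxa_ge Hp; have h2 := mxa_ge Hq; have h3 := mxa_ge0 (prios K).
have h4 := ler_norm p; have h5 : (- `|q| <= q)%R by rewrite lerNnormlW.
move: Ep; set m1 := mxa (prios K); set m2 := mxa (prios G) => Ep.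
have : (p < q + (m1 + m2 + 1))%R.
  have h6 : (- m2 <= q)%R by apply: le_trans h5; rewrite lerN2.
  have h7 : (p <= m1)%R by apply: le_trans h1.
  lra.
by rewrite Ep ltxx.
Qed.
Definition renf (N M x : nat) : nat :=
  if x < M then x + N else if (N <= x) && (x < N + M) then x - N else x.
Lemma renfK N M : M <= N -> cancel (renf N M) (renf N M).
Proof.
move=> H x; rewrite /renf; case: (ltnP x M) => H1.
  have -> : (x + N < M) = false by apply/negbTE; rewrite -leqNgt; lia.
  have -> : (N <= x + N) && (x + N < N + M) by apply/andP; split; lia.
  by rewrite addnK.
case: (boolP ((N <= x) && (x < N + M))) => /= H2.
  have -> : x - N < M by lia.
  by rewrite subnK //; case/andP: H2.
by rewrite ltnNge H1 /= (negbTE H2).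
Qed.
Definition rensub N M : subst := fun x => Var (renf N M x).
Lemma renaming_rensub N M : M <= N -> renaming (rensub N M).
Proof.
move=> H; exists (renf N M); split => //.
  by exists (renf N M); apply: renfK.
exists (iota 0 (N + M)) => x; rewrite mem_iota /= add0n -leqNgt => Hx.
rewrite /renf; have -> : (x < M) = false by apply/negbTE; rewrite -leqNgt; lia.
by have -> : (N <= x) && (x < N + M) = false by apply/negbTE; rewrite negb_and -!leqNgt; lia.
Qed.
Lemma rensub_lt N M v : v < M -> rensub N M v = Var (v + N).
Proof. by rewrite /rensub /renf => ->. Qed.

Definition mv (c : clause) := (foldr maxn 0 (cvars c)).+1.
Lemma mv_gt c v : v \in cvars c -> v < mv c.
Proof.
rewrite /mv ltnS; elim: (cvars c) => //= x s IH; rewrite inE => /orP [/eqP ->|/IH H].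
  by rewrite leq_maxl.
by rewrite (leq_trans H) // leq_maxr.
Qed.

Lemma gvarsP (G : pgoal) y : y \in gvars G -> exists2 p, List.In p G & y \in avars p.1.
Proof. exact: flatten_map_mem. Qed.
Lemma gvarsP2 (G : pgoal) y p : List.In p G -> y \in avars p.1 -> y \in gvars G.
Proof. exact: flatten_map_mem2. Qed.

Lemma rcvars_fresh c N y : mv c <= N -> y \in cvars (crename (rensub N (mv c)) c) ->
  N <= y < N + mv c.
Proof.
move=> HN; rewrite /cvars /= mem_cat => /orP [|/gvarsP [p' /List.in_map_iff [p [<- Hp]]] /=].
  move/avars_subst => [x Hx]; rewrite rensub_lt; last by apply: mv_gt; rewrite /cvars mem_cat Hx.
  rewrite inE => /eqP ->; apply/andP; split; [lia|]; have := @mv_gt c x; rewrite /cvars mem_cat Hx => /(_ isT); lia.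
move/avars_subst => [x Hx]; rewrite rensub_lt; last first.
  by apply: mv_gt; rewrite /cvars mem_cat (gvarsP2 Hp Hx) orbT.
rewrite inE => /eqP ->; apply/andP; split; [lia|]; have := @mv_gt c x.
by rewrite /cvars mem_cat (gvarsP2 Hp Hx) orbT => /(_ isT); lia.
Qed.

Definition sq_split (SQ : pstep -> Prop) (c : clause) (Ms Mq : pgoal) : Prop :=
  [/\ is_pgoal (Ms ++ Mq), cbody c = Ms ++ Mq &
      forall s, SQ s -> st_clause s = c ->
        exists a K, st_goal s = a :: K /\
        exists gam, [/\ shifting gam,
          is_pgoal (gshift gam (gsubst (st_ren s) Ms) ++ K
                    ++ gshift gam (gsubst (st_ren s) Mq)) &
          st_res s = gsubst (st_mgu s)
             (gshift gam (gsubst (st_ren s) Ms) ++ K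
              ++ gshift gam (gsubst (st_ren s) Mq))]].

Lemma sq_res SQ c Ms Mq s a K : sq_split SQ c Ms Mq -> SQ s -> st_clause s = c ->
  st_goal s = a :: K ->
  map fst (st_res s) = map (asubst (st_mgu s))
     (map (asubst (st_ren s)) (map fst Ms) ++ map fst K ++ map (asubst (st_ren s)) (map fst Mq))
  /\ is_pgoal (st_res s).
Proof.
move=> [_ _ H] Hs Hc Hg; have [a' [K' [Hg' [gam [_ Hp ->]]]]] := H s Hs Hc.
move: Hg'; rewrite Hg => -[_ EK]; subst K'.
rewrite is_pgoal_gsubst Hp gsubst_fst !map_cat !gshift_fst !gsubst_fst; by split.
Qed.

Lemma mcl_same s1 s2 : is_step s1 -> is_step s2 -> st_goal s1 = st_goal s2 ->
  st_clause s1 = st_clause s2 -> st_shift s1 = st_shift s2 -> congruent_lowering s2 s1.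
Proof.
move=> H1 H2 Hg Hc Hsh.
have [a [K HG]] : exists a K, st_goal s1 = a :: K.
  by move: H1; rewrite /is_step; case: (st_goal s1) => // a K _; exists a, K.
have HK : is_pgoal K.
  move: H1; rewrite /is_step HG => -[Hp _]; move: Hp; rewrite /is_pgoal /=; exact: path_sorted.
exists [::], Var, id; split.
  exists a, K; do 6 (try split) => //.
  - by exists id.
  - by rewrite -Hg HG /lgoal gsubst_id gshift_id pplus_nil // asubst_id; case: (a).
exists a, K; split => //; exists id; split => //; first exact: shifting_id.
by rewrite gshift_id Hsh Hc.
Qed.

Lemma is_step_intro G a K c xi mu g r :
  G = a :: K -> is_pgoal G -> is_clause c -> renaming xi ->
  disjoint_vars (gvars G) (cvars (crename xi c)) ->
  idem_relevant_mgu mu a.1 (asubst xi (chead c)) -> shifting g ->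
  no_common_prio K (gshift g (gsubst xi (cbody c))) ->
  r = gsubst mu (pplus K (gshift g (gsubst xi (cbody c)))) ->
  is_step (PStep G c xi mu g r).
Proof. by move=> -> H1 H2 H3 H4 H5 H6 H7 H8; rewrite /is_step /=. Qed.

Lemma is_step_elim s a K : is_step s -> st_goal s = a :: K ->
  [/\ is_pgoal (st_goal s), is_clause (st_clause s), renaming (st_ren s),
      disjoint_vars (gvars (st_goal s)) (cvars (crename (st_ren s) (st_clause s))) &
   [/\ idem_relevant_mgu (st_mgu s) a.1 (asubst (st_ren s) (chead (st_clause s))),
      shifting (st_shift s),
      no_common_prio K (gshift (st_shift s) (gsubst (st_ren s) (cbody (st_clause s)))) &
      st_res s = gsubst (st_mgu s) (pplus K (gshift (st_shift s) (gsubst (st_ren s) (cbody (st_clause s)))))]].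
Proof.
rewrite /is_step => + HG; rewrite HG => -[H1 [H2 [H3 [H4 [H5 [H6 [H7 H8]]]]]]].
by split => //; rewrite HG.
Qed.

Lemma sq_step SQ (G : pgoal) a K c xi mu :
  stack_queue SQ ->
  G = a :: K -> is_pgoal G -> is_clause c -> renaming xi ->
  disjoint_vars (gvars G) (cvars (crename xi c)) ->
  idem_relevant_mgu mu a.1 (asubst xi (chead c)) ->
  exists s, [/\ SQ s, is_step s, st_goal s = G, st_clause s = c & st_ren s = xi /\ st_mgu s = mu].
Proof.
move=> [[Hst Hex Hcl] _] HG Hp Hc Hxi Hd Hmu.
set t := (mxa (prios K) + mxa (prios (gsubst xi (cbody c))) + 1)%R.
set s0 := PStep G c xi mu (fun q => q + t)%R
   (gsubst mu (pplus K (gshift (fun q => q + t)%R (gsubst xi (cbody c))))).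
have Hs0 : is_step s0.
  apply: is_step_intro HG _ _ _ _ _ _ _ _ => //; [exact: shifting_tr | exact: tr_nocommon].
have [s1 [Hs1 Hs1' Hg1 Hc1]] := Hex G c (ex_intro _ s0 (And3 Hs0 erefl erefl)).
set s2 := PStep G c xi mu (st_shift s1)
   (gsubst mu (pplus K (gshift (st_shift s1) (gsubst xi (cbody c))))).
have [_ _ _ _ [_ Hsh Hnc _]] := is_step_elim Hs1' (etrans Hg1 HG).
have Hs2 : is_step s2.
  apply: is_step_intro HG _ _ _ _ _ _ _ _ => //.
  by move: Hnc; rewrite /no_common_prio !prios_gshift !prios_gsubst Hc1.
exists s2; split => //; apply: (Hcl s1 s2) => //; split.
  by apply: mcl_same => //; rewrite Hg1.
by apply: mcl_same => //; rewrite Hg1.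
Qed.
Definition dstep := PStep [::] (Clause (Atom 0 [::]) [::]) Var Var id [::].
Definition dpat : patom := (Atom 0 [::], 0%R).

Lemma chain_nth G ds R : chain G ds R -> forall i, i < size ds ->
  st_goal (nth dstep ds i) = (if i is i'.+1 then st_res (nth dstep ds i') else G).
Proof.
elim: ds G => //= s ds IH G [Hg Hc] [|i] Hi //=.
by rewrite (IH _ Hc i Hi); case: i Hi.
Qed.

Lemma chain_last G ds R : chain G ds R ->
  R = (if size ds is n'.+1 then st_res (nth dstep ds n') else G).
Proof.
elim: ds G => //= s ds IH G [Hg Hc]; rewrite (IH _ Hc); by case: ds IH Hc.
Qed.

Lemma apart_nth U ds : apart U ds -> forall i, i < size ds ->
  disjoint_vars (rcvars (nth dstep ds i)) (U ++ flatten (map rcvars (take i ds))).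
Proof.
elim: ds U => //= s ds IH U [H1 H2] [|i] Hi /=; first by rewrite cats0.
by rewrite catA; apply: IH.
Qed.

Definition avs (l : seq atom) : seq nat := flatten (map avars l).
Lemma gvars_avs G : gvars G = avs (map fst G).
Proof. by rewrite /gvars /avs -map_comp. Qed.

Lemma avsP l y : y \in avs l -> exists2 a, List.In a l & y \in avars a.
Proof. exact: flatten_map_mem. Qed.
Lemma avsP2 l y a : List.In a l -> y \in avars a -> y \in avs l.
Proof. exact: flatten_map_mem2. Qed.

Lemma nth_In_seq (T : Type) (d : T) (s : seq T) p : p < size s -> List.In (nth d s p) s.
Proof. elim: s p => //= x s IH [|p] Hp; [by left | right; exact: IH]. Qed.

Lemma nth_body_vars c xi p y : p < size (cbody c) ->
  y \in avars (asubst xi (nth dpat (cbody c) p).1) -> y \in cvars (crename xi c).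
Proof.
move=> Hp Hy; rewrite /cvars mem_cat; apply/orP; right.
rewrite gvars_avs /= gsubst_fst; apply: (avsP2 _ Hy).
apply: List.in_map; apply: List.in_map; exact: nth_In_seq.
Qed.

Lemma map_nth_body (Ms Mq : pgoal) (xi : subst) :
  [seq asubst xi (nth dpat (Ms ++ Mq) p).1 | p <- iota 0 (size Ms)] = map (asubst xi) (map fst Ms) /\
  [seq asubst xi (nth dpat (Ms ++ Mq) p).1 | p <- iota (size Ms) (size Mq)] = map (asubst xi) (map fst Mq).
Proof.
have H1 : [seq nth dpat (Ms ++ Mq) p | p <- iota 0 (size Ms)] = Ms.
  by rewrite map_nth_iota0 ?size_cat ?leq_addr // take_size_cat.
have H2 : [seq nth dpat (Ms ++ Mq) p | p <- iota (size Ms) (size Mq)] = Mq.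
  by rewrite map_nth_iota ?size_cat ?addKn // drop_size_cat // take_size.
split.
  by rewrite (map_comp (fun a => asubst xi a.1)) H1 -map_comp.
by rewrite (map_comp (fun a => asubst xi a.1)) H2 -map_comp.
Qed.

Lemma asubst_id_map l : map (asubst Var) l = l.
Proof. rewrite -[RHS]map_id; apply: eq_map => a; exact: asubst_id. Qed.

Lemma eq_in_map' (T1 T2 : Type) (f g : T1 -> T2) (l : seq T1) :
  (forall x, List.In x l -> f x = g x) -> map f l = map g l.
Proof.
elim: l => //= x l IH H; rewrite H; last by left.
by rewrite IH // => y Hy; apply: H; right.
Qed.
Definition lab := (nat * nat)%type.

Section Orig.
Variables (SQ : pstep -> Prop) (G0 Q : pgoal) (ds : seq pstep) (spl : clause -> pgoal * pgoal).
Hypothesis Hspl : forall c, is_clause c -> sq_split SQ c (spl c).1 (spl c).2.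
Hypothesis Hchain : chain G0 ds Q.
Hypothesis Hstep : forall s, List.In s ds -> is_step s.
Hypothesis HSQ : forall s, List.In s ds -> SQ s.
Hypothesis Hapart : apart (gvars G0) ds.
Variable P : seq clause.
Hypothesis HP : forall s, List.In s ds -> List.In (st_clause s) P.
Hypothesis HSQall : stack_queue SQ.

Definition stp i := nth dstep ds i.
Definition cl i := st_clause (stp i).
Definition ms i := size (spl (cl i)).1.
Definition mq i := size (spl (cl i)).2.
Definition gl i := if i is i'.+1 then st_res (stp i') else G0.
Fixpoint O i : seq lab :=
  if i is i'.+1 then [seq (i, p) | p <- iota 0 (ms i')] ++ behead (O i') ++
                     [seq (i, p) | p <- iota (ms i') (mq i')]
  else [seq (0, j) | j <- iota 0 (size G0)].
Definition front i := head (0, 0) (O i).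
Definition raw (l : lab) : atom :=
  if l.1 is k.+1 then asubst (st_ren (stp k)) (nth dpat (cbody (cl k)) l.2).1
  else (nth dpat G0 l.2).1.
Fixpoint sig i : subst :=
  if i is i'.+1 then fun x => tsubst (st_mgu (stp i')) (sig i' x) else Var.
Definition used i := gvars G0 ++ flatten (map rcvars (take i ds)).

Lemma stp_in i : i < size ds -> List.In (stp i) ds.
Proof. exact: nth_In_seq. Qed.
Lemma goal_stp i : i < size ds -> st_goal (stp i) = gl i.
Proof. move=> H; rewrite /stp (chain_nth Hchain H); by case: i H. Qed.
Lemma gl_n : gl (size ds) = Q.
Proof. rewrite (chain_last Hchain); by case: (size ds). Qed.
Lemma used_S i : i < size ds -> used i.+1 = used i ++ rcvars (stp i).
Proof. by move=> H; rewrite /used (take_nth dstep H) map_rcons flatten_rcons catA. Qed.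
Lemma disj i : i < size ds -> disjoint_vars (rcvars (stp i)) (used i).
Proof. exact: apart_nth. Qed.
Lemma stp_step i : i < size ds -> is_step (stp i).
Proof. by move=> H; apply: Hstep; apply: stp_in. Qed.
Lemma gl_cons i : i < size ds -> exists a K, gl i = a :: K.
Proof.
move=> H; have := stp_step H; rewrite /is_step -(goal_stp H).
by case: (st_goal (stp i)) => // a K _; exists a, K.
Qed.
Lemma cl_clause i : i < size ds -> is_clause (cl i).
Proof.
move=> H; have [a [K HK]] := gl_cons H; rewrite -(goal_stp H) in HK.
by have [_ ? _ _ _] := is_step_elim (stp_step H) HK.
Qed.

Lemma body_vars c xi p y : List.In p (cbody c) -> y \in avars (asubst xi p.1) ->
  y \in cvars (crename xi c).
Proof.
move=> Hp Hy; rewrite /cvars mem_cat; apply/orP; right.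
rewrite gvars_avs /= gsubst_fst; apply: (avsP2 _ Hy).
by apply: List.in_map; apply: List.in_map.
Qed.



Lemma inv i : i <= size ds ->
  [/\ map fst (gl i) = map (asubst (sig i)) (map raw (O i)),
      {subset gvars (gl i) <= used i} &
      forall x, x \notin used i -> sig i x = Var x].
Proof.
elim: i => [_|i IH Hi].
  split => //=.
  - rewrite asubst_id_map; rewrite -map_comp.
    have -> : [seq raw (0, j) | j <- iota 0 (size G0)] = [seq (nth dpat G0 j).1 | j <- iota 0 (size G0)] by [].
    have -> : [seq (nth dpat G0 j).1 | j <- iota 0 (size G0)] = map fst [seq nth dpat G0 j | j <- iota 0 (size G0)] by rewrite -map_comp.
    by rewrite map_nth_iota0 // take_size.
  - by move=> y; rewrite /used take0 /= cats0.
have Hi' : i < size ds by [].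
have [IH1 IH2 IH3] := IH (ltnW Hi).
set s := stp i.
have [a [K HK]] := gl_cons Hi'.
have HKs : st_goal s = a :: K by rewrite goal_stp.
have [_ Hcl _ _ [Hmu _ _ _]] := is_step_elim (stp_step Hi') HKs.
have [HMsq Hbody Hshape] := Hspl Hcl.
have [Hres _] := sq_res (Hspl Hcl) (HSQ (stp_in Hi')) erefl HKs.
set xi := st_ren s; set mu := st_mgu s.
set Ms := (spl (st_clause s)).1; set Mq := (spl (st_clause s)).2.
have Hdisj := disj Hi'.
(* atoms built from renamed clause variables are left alone by sig i *)
have Hfr : forall b, (forall y, y \in avars b -> y \in rcvars s) ->
    asubst (sig i.+1) b = asubst mu b.
  move=> b Hb; rewrite /= -/mu -asubst_comp; congr asubst.
  rewrite -[RHS]asubst_id; apply: asubst_ext => y Hy; apply: IH3.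
  by apply/negP => Hu; apply: (Hdisj y (Hb y Hy) Hu).
have HaK : map fst K = map (asubst (sig i)) (map raw (behead (O i))).
  by move: IH1; rewrite HK /= => /(congr1 behead) /= ->; rewrite !behead_map.
have Hvars_a : forall y, y \in avars a.1 -> y \in used i.
  by move=> y Hy; apply: IH2; rewrite HK /gvars /= mem_cat Hy.
have Hvars_K : forall y, y \in gvars K -> y \in used i.
  by move=> y Hy; apply: IH2; rewrite HK /gvars /= mem_cat Hy orbT.
have Hvars_h : forall y, y \in avars (asubst xi (chead (st_clause s))) -> y \in rcvars s.
  by move=> y Hy; rewrite /rcvars /cvars mem_cat Hy.
have Hvars_B : forall p y, List.In p (cbody (st_clause s)) -> y \in avars (asubst xi p.1) -> y \in rcvars s.
  by move=> p y Hp Hy; apply: (body_vars Hp Hy).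
have HinMs : forall p, List.In p Ms -> List.In p (cbody (st_clause s)).
  by move=> p Hp; rewrite Hbody; apply: List.in_or_app; left.
have HinMq : forall p, List.In p Mq -> List.In p (cbody (st_clause s)).
  by move=> p Hp; rewrite Hbody; apply: List.in_or_app; right.
split.
- rewrite /= Hres.
  have [E1 E2] := map_nth_body Ms Mq xi.
  rewrite !map_cat -/(O i); congr (_ ++ _ ++ _).
  + have HS : map raw [seq (i.+1, p) | p <- iota 0 (ms i)] = map (asubst xi) (map fst Ms).
      by rewrite -E1 -map_comp; apply: eq_map => p; rewrite /= /raw /= /cl -/s Hbody.
    rewrite HS; apply: eq_in_map' => b Hb.
    by rewrite Hfr // => y; move: Hb => /List.in_map_iff [b' [<- /List.in_map_iff [p [<- Hp]]]]; apply: Hvars_B; apply: HinMs.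
  + by rewrite HaK -!map_comp; apply: eq_map => l /=; rewrite asubst_comp.
  + have HS : map raw [seq (i.+1, p) | p <- iota (ms i) (mq i)] = map (asubst xi) (map fst Mq).
      by rewrite -E2 -map_comp; apply: eq_map => p; rewrite /= /raw /= /cl -/s Hbody.
    rewrite HS; apply: eq_in_map' => b Hb.
    by rewrite Hfr // => y; move: Hb => /List.in_map_iff [b' [<- /List.in_map_iff [p [<- Hp]]]]; apply: Hvars_B; apply: HinMq.
- move=> y; rewrite (used_S Hi') /= gvars_avs Hres => /avsP [b /List.in_map_iff [b0 [<- Hb0]]] /avars_subst [x Hx Hy].
  rewrite mem_cat.
  have Hx' : (x \in used i) || (x \in rcvars s).
    move: Hb0; rewrite !List.in_app_iff => -[|[|]].
    + move=> /List.in_map_iff [b1 [Eb /List.in_map_iff [p [Ep Hp]]]]; subst.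
      by rewrite (Hvars_B p x (HinMs _ Hp) Hx) orbT.
    + move=> Hb; rewrite Hvars_K //; rewrite gvars_avs; exact: avsP2 Hb Hx.
    + move=> /List.in_map_iff [b1 [Eb /List.in_map_iff [p [Ep Hp]]]]; subst.
      by rewrite (Hvars_B p x (HinMq _ Hp) Hx) orbT.
  case: (classic (mu x = Var x)) => Emu.
    by move: Hy; rewrite -/s -/mu Emu inE => /eqP ->.
  have [_ _ _ Hrel] := Hmu; have [_ Hr2] := Hrel x Emu; have := Hr2 y Hy.
  rewrite -/s mem_cat => /orP [/Hvars_a -> //|/Hvars_h ->]; by rewrite orbT.
- move=> x; rewrite (used_S Hi') mem_cat negb_or => /andP [Hx1 Hx2] /=.
  rewrite IH3 //=; case: (classic (mu x = Var x)) => // Emu.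
  have [_ _ _ Hrel] := Hmu; have [] := Hrel x Emu.
  by rewrite mem_cat => /orP [/Hvars_a|/Hvars_h]; [rewrite (negbTE Hx1) | rewrite (negbTE Hx2)].
Qed.

Lemma size_O i : i <= size ds -> size (O i) = size (gl i).
Proof. by move/inv => [H _ _]; rewrite -(size_map fst (gl i)) H !size_map. Qed.

Lemma O_le i l : l \in O i -> l.1 <= i.
Proof.
elim: i l => [|i IH] l /=; first by move/mapP => [j _ E]; rewrite E.
rewrite !mem_cat => /orP [/mapP [p _ E] |/orP [/mem_behead /IH H|/mapP [p _ E]]]; try by rewrite E.
exact: leqW.
Qed.

Lemma front_le k : (front k).1 <= k.
Proof. rewrite /front; case E: (O k) => [//|l s] /=; apply: O_le; by rewrite E inE eqxx. Qed.

Lemma front_O i : i < size ds -> O i = front i :: behead (O i).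
Proof.
move=> H; have := size_O (ltnW H); have [a [K ->]] := gl_cons H.
by rewrite /front; case: (O i).
Qed.

Definition resolved i (l : lab) := exists2 k, k < i & front k = l.
Definition created i (l : lab) :=
  (l.1 = 0 /\ l.2 < size G0) \/ exists2 k, l.1 = k.+1 & k < i /\ l.2 < ms k + mq k.

Lemma resolved_S i l : resolved i l -> resolved i.+1 l.
Proof. by move=> [k Hk E]; exists k => //; apply: ltnW. Qed.

Lemma alive i l : i <= size ds -> created i l -> resolved i l \/ l \in O i.
Proof.
elim: i => [_ [[E1 E2]|[k _ [//]]]|i IH Hi Hc].
  by right; case: l E1 E2 => a b /= -> H; apply/mapP; exists b => //; rewrite mem_iota.
have Hi' : i < size ds by [].
have Hc' : created i l \/ exists2 p, l = (i.+1, p) & p < ms i + mq i.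
  case: Hc => [H|[k Hk [Hki Hp]]]; first by left; left.
  case: (ltngtP k i) => Hki'; [by left; right; exists k | by move: Hki; rewrite ltnS leqNgt Hki' |].
  right; exists l.2; last by rewrite -Hki'.
  by rewrite -Hki' -Hk; case: (l).
case: Hc' => [/(IH (ltnW Hi)) [/resolved_S H|H]|[p -> Hp]]; [by left | |].
  case: (eqVneq l (front i)) => [El|Nl]; first by left; exists i.
  right; move: H; rewrite (front_O Hi') inE (negbTE Nl) /= => H.
  by rewrite /= !mem_cat H orbT.
right; rewrite /= !mem_cat; case: (ltnP p (ms i)) => Hpm.
  by apply/orP; left; apply/mapP; exists p => //; rewrite mem_iota.
apply/orP; right; apply/orP; right; apply/mapP; exists p => //; rewrite mem_iota Hpm /=.
by rewrite -(addnC (mq i)) addnC.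
Qed.

Inductive sdesc (i : nat) (l : lab) : lab -> Prop :=
| sd0 : sdesc i l l
| sdS k p : k < i -> p < ms k -> sdesc i l (front k) -> sdesc i l (k.+1, p).

Lemma sdesc_trans i l1 l2 l3 : sdesc i l1 l2 -> sdesc i l2 l3 -> sdesc i l1 l3.
Proof. move=> H1; elim => // k p Hk Hp _ IH; exact: sdS. Qed.

Lemma sdesc_mon i j l m : i <= j -> sdesc i l m -> sdesc j l m.
Proof. move=> Hij; elim => [|k p Hk Hp _ IH]; [exact: sd0 | apply: sdS => //; exact: leq_trans Hk Hij]. Qed.

Lemma sdesc_created i l m : created i l -> sdesc i l m -> created i m.
Proof.
move=> Hl; elim => // k p Hk Hp _ _; right; exists k => //; split => //.
exact: leq_trans Hp (leq_addr _ _).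
Qed.

Lemma sdesc_step i l m : sdesc i.+1 l m ->
  sdesc i l m \/ exists2 p, m = (i.+1, p) & p < ms i /\ sdesc i l (front i).
Proof.
elim => [|k p Hk Hp _ [IH|[p' E [_ _]]]]; first by left; exact: sd0.
- case: (ltngtP k i) => Hki.
  + by left; apply: sdS.
  + by move: Hk; rewrite ltnS leqNgt Hki.
  + by subst k; right; exists p.
- by have := front_le k; rewrite E /= => H; move: Hk; rewrite ltnS leqNgt H.
Qed.

Lemma sig_trans i j : i <= j -> exists rho, forall x, sig j x = tsubst rho (sig i x).
Proof.
elim: j => [|j IH]; first by rewrite leqn0 => /eqP ->; exists Var => x; rewrite tsubst_id.
rewrite leq_eqVlt => /orP [/eqP ->|/IH [rho Hrho]]; first by exists Var => x; rewrite tsubst_id.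
exists (fun x => tsubst (st_mgu (stp j)) (rho x)) => x /=; by rewrite Hrho tsubst_comp.
Qed.

Definition theta := sig (size ds).

Lemma eqn_front k : k < size ds ->
  asubst theta (raw (front k)) = asubst theta (asubst (st_ren (stp k)) (chead (cl k))).
Proof.
move=> Hk; have [H1 _ H3] := inv (ltnW Hk).
have [a [K HK]] := gl_cons Hk.
have HKs : st_goal (stp k) = a :: K by rewrite goal_stp.
have [_ _ _ _ [[Hu _ _ _] _ _ _]] := is_step_elim (stp_step Hk) HKs.
have Ha : a.1 = asubst (sig k) (raw (front k)).
  by move: H1; rewrite HK (front_O Hk) /= => -[].
have Hdisj := disj Hk.
have Hfix : asubst (sig k) (asubst (st_ren (stp k)) (chead (cl k))) = asubst (st_ren (stp k)) (chead (cl k)).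
  rewrite -[RHS]asubst_id; apply: asubst_ext => y Hy; apply: H3.
  by apply/negP => Hu'; apply: (Hdisj y _ Hu'); rewrite /rcvars /cvars mem_cat Hy.
have [rho Hrho] := sig_trans (leq0n 0).
have [rho' Hrho'] := @sig_trans k.+1 (size ds) Hk.
have E : asubst (sig k.+1) (raw (front k)) = asubst (sig k.+1) (asubst (st_ren (stp k)) (chead (cl k))).
  rewrite /= -!asubst_comp -Ha Hfix; exact: Hu.
rewrite /theta (asubst_ext (s2 := fun x => tsubst rho' (sig k.+1 x))); last by move=> x _; rewrite Hrho'.
rewrite [RHS](asubst_ext (s2 := fun x => tsubst rho' (sig k.+1 x))); last by move=> x _; rewrite Hrho'.
by rewrite -!(asubst_comp (sig k.+1) rho') E.
Qed.
Definition entry := (bool * lab * atom)%type.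
Definition olabs (E : seq entry) : seq lab := [seq e.1.2 | e <- E & ~~ e.1.1].
Definition clabs (E : seq entry) : seq lab := [seq e.1.2 | e <- E & e.1.1].
Definition dent : entry := (false, (0, 0), Atom 0 [::]).

Definition V10 i (E : seq entry) := forall q, q < size E -> (nth dent E q).1.1 ->
  forall m, sdesc i (nth dent E q).1.2 m -> resolved i m \/ m \in olabs (take q E).

Lemma olabs_cat E1 E2 : olabs (E1 ++ E2) = olabs E1 ++ olabs E2.
Proof. by rewrite /olabs filter_cat map_cat. Qed.
Lemma clabs_cat E1 E2 : clabs (E1 ++ E2) = clabs E1 ++ clabs E2.
Proof. by rewrite /clabs filter_cat map_cat. Qed.

Lemma take_in_mem (E : seq entry) q m : m \in olabs (take q E) -> m \in olabs E.
Proof.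
by rewrite -{2}(cat_take_drop q E) olabs_cat mem_cat => ->.
Qed.

Lemma pos3 (X Y Z : seq entry) q : q < size (X ++ Y ++ Z) ->
  [\/ q < size X /\ nth dent (X ++ Y ++ Z) q = nth dent X q /\ take q (X ++ Y ++ Z) = take q X,
      exists2 q1, q = size X + q1 & q1 < size Y /\ nth dent (X ++ Y ++ Z) q = nth dent Y q1 /\
                  take q (X ++ Y ++ Z) = X ++ take q1 Y |
      exists2 q2, q = size X + size Y + q2 & nth dent (X ++ Y ++ Z) q = nth dent Z q2 /\
                  take q (X ++ Y ++ Z) = X ++ Y ++ take q2 Z].
Proof.
move=> Hq; case: (ltnP q (size X)) => H1.
  by apply: Or31; split => //; rewrite nth_cat take_cat H1.
have H1' : (q < size X) = false by rewrite ltnNge H1.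
case: (ltnP (q - size X) (size Y)) => H2.
  apply: Or32; exists (q - size X); first by rewrite subnKC.
  by rewrite nth_cat take_cat H1' nth_cat take_cat H2.
have H2' : (q - size X < size Y) = false by rewrite ltnNge H2.
apply: Or33; exists (q - size X - size Y); first by lia.
by rewrite nth_cat take_cat H1' nth_cat take_cat H2'.
Qed.
Lemma olabs_cons_t (e : entry) E : e.1.1 = true -> olabs (e :: E) = olabs E.
Proof. by rewrite /olabs /= => ->. Qed.
Lemma olabs_cons_f (e : entry) E : e.1.1 = false -> olabs (e :: E) = e.1.2 :: olabs E.
Proof. by rewrite /olabs /= => ->. Qed.

Lemma V10_orig i e E1 KS KQ :
  V10 i (e :: E1) -> e.1.1 = false -> e.1.2 = front i ->
  (forall x, List.In x KS -> x.1.1 = false) -> (forall x, List.In x KQ -> x.1.1 = false) ->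
  olabs KS = [seq (i.+1, p) | p <- iota 0 (ms i)] ->
  V10 i.+1 (KS ++ E1 ++ KQ).
Proof.
move=> H10 Hf Hl HS HQ HoS q Hq Hfl m Hm.
case: (pos3 Hq) => [[Hq1 [En Et]]|[q1 Eq [Hq1 [En Et]]]|[q2 Eq [En Et]]].
- by move: Hfl; rewrite En (HS _ (nth_In_seq dent Hq1)).
- rewrite En in Hfl Hm.
  have Hold : forall m, sdesc i (nth dent E1 q1).1.2 m -> resolved i m \/ m \in olabs (take q1.+1 (e :: E1)).
    by apply: (H10 q1.+1).
  case: (sdesc_step Hm) => [/Hold [/resolved_S H|]|[p Emp [Hp _]]]; first by left.
    rewrite /= olabs_cons_f // inE => /orP [/eqP ->|H]; first by left; exists i; rewrite -?Hl.
    by right; rewrite Et olabs_cat mem_cat H orbT.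
  by right; rewrite Et olabs_cat mem_cat HoS Emp; apply/orP; left; apply/mapP; exists p; rewrite ?mem_iota.
- case: (ltnP q2 (size KQ)) => Hq2; first by move: Hfl; rewrite En (HQ _ (nth_In_seq dent Hq2)).
  by move: Hfl; rewrite En nth_default.
Qed.

Lemma V10_copy i k e E1 KS KQ :
  i <= size ds -> k < i -> front k = e.1.2 -> e.1.1 = true -> V10 i (e :: E1) ->
  (forall x, List.In x KS -> x.1.1 = true /\ exists2 p, x.1.2 = (k.+1, p) & p < ms k) ->
  (forall x, List.In x KQ -> x.1.1 = true /\ exists2 p, x.1.2 = (k.+1, p) & p < ms k + mq k) ->
  olabs E1 = O i ->
  V10 i (KS ++ E1 ++ KQ).
Proof.
move=> Hi Hki Hfr Hf H10 HS HQ HO q Hq Hfl m Hm.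
case: (pos3 Hq) => [[Hq1 [En Et]]|[q1 Eq [Hq1 [En Et]]]|[q2 Eq [En Et]]].
- rewrite En in Hm; have [_ [p Ep Hp]] := HS _ (nth_In_seq dent Hq1); rewrite Ep in Hm.
  have H0 : sdesc i e.1.2 m.
    apply: sdesc_trans Hm; apply: sdS => //; rewrite Hfr; exact: sd0.
  by case: (H10 0 erefl Hf m H0) => [H|//]; left.
- rewrite En in Hfl Hm.
  case: (H10 q1.+1 Hq1 Hfl m Hm) => [H|]; first by left.
  by rewrite /= olabs_cons_t // => H; right; rewrite Et olabs_cat mem_cat H orbT.
- case: (ltnP q2 (size KQ)) => Hq2; last by move: Hfl; rewrite En nth_default.
  rewrite En in Hm; have [_ [p Ep Hp]] := HQ _ (nth_In_seq dent Hq2); rewrite Ep in Hm.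
  have Hc : created i (k.+1, p) by right; exists k.
  case: (alive Hi (sdesc_created Hc Hm)) => [H|H]; first by left.
  by right; rewrite Et !olabs_cat !mem_cat HO H orbT.
Qed.

Lemma pc_bound i (pc : seq lab) : i <= size ds -> uniq pc -> (forall l, l \in pc -> resolved i l) ->
  size pc <= size ds.
Proof.
move=> Hi Hu Hr; rewrite -(size_iota 0 (size ds)) -(size_map front).
apply: uniq_leq_size => // l /Hr [k Hk <-]; apply: map_f; rewrite mem_iota /=.
exact: leq_trans Hk Hi.
Qed.
Definition Inv i (E : seq entry) (pc : seq lab) (GE : pgoal) (sE th' : subst) (b : nat) (UE : seq nat) :=
 [/\ (i <= size ds) /\ is_pgoal GE,
     [/\ map fst GE = map (fun e : entry => asubst sE e.2) E,
         (forall y, y \in UE -> y < b),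
         (forall x, b <= x -> sE x = Var x),
         (forall e : entry, List.In e E -> forall y, y \in avars e.2 -> y < b) &
         (forall x, x < b -> forall y, y \in tvars (sE x) -> y < b)],
     (exists d, forall x, th' x = tsubst d (sE x)) /\
       (forall e : entry, List.In e E -> asubst th' e.2 = asubst theta (raw e.1.2)),
     olabs E = O i /\ V10 i E &
     [/\ uniq (clabs E ++ pc), (forall l, l \in pc -> resolved i l) &
         (forall l k, l \in clabs E ++ pc -> l.1 = k.+1 -> front k \in pc)]].

Definition meas i (pc : seq lab) := (size ds - i) * (size ds).+1 + (size ds - size pc).

Lemma gvars_lt (GE : pgoal) (E : seq entry) sE b :
  map fst GE = map (fun e : entry => asubst sE e.2) E ->
  (forall e : entry, List.In e E -> forall y, y \in avars e.2 -> y < b) ->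
  (forall x, x < b -> forall y, y \in tvars (sE x) -> y < b) ->
  forall y, y \in gvars GE -> y < b.
Proof.
move=> H1 H2 H3 y; rewrite gvars_avs H1 => /avsP [a /List.in_map_iff [e [<- He]]].
by move/avars_subst => [x Hx Hy]; apply: (H3 x) => //; apply: H2 He _ Hx.
Qed.

Lemma kid_in c p y : p < size (cbody c) -> y \in avars (nth dpat (cbody c) p).1 -> y \in cvars c.
Proof.
move=> Hp Hy; rewrite /cvars mem_cat; apply/orP; right.
by apply: (gvarsP2 (p := nth dpat (cbody c) p)) => //; apply: nth_In_seq.
Qed.

Lemma In_mem (T : eqType) (x : T) s : List.In x s -> x \in s.
Proof. elim: s => //= y s IH [->|/IH H]; rewrite inE ?eqxx ?H ?orbT //. Qed.

Lemma kids_prop f k (xi : subst) lo len (x : entry) :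
  List.In x [seq (f, (k.+1, p), asubst xi (nth dpat (cbody (cl k)) p).1) | p <- iota lo len] ->
  exists p, [/\ lo <= p < lo + len & x = (f, (k.+1, p), asubst xi (nth dpat (cbody (cl k)) p).1)].
Proof.
move=> /List.in_map_iff [p [<- Hp]]; exists p; split => //.
by have := In_mem Hp; rewrite mem_iota.
Qed.

Lemma olabs_kids f k (g : nat -> atom) (ps : seq nat) :
  olabs [seq (f, (k.+1, p), g p) | p <- ps] =
  if f then [::] else [seq (k.+1, p) | p <- ps].
Proof. elim: ps => [|p ps IH] /=; first by case: f. move: IH; rewrite /olabs /=; by case: f => /= ->. Qed.

Lemma clabs_kids f k (g : nat -> atom) (ps : seq nat) :
  clabs [seq (f, (k.+1, p), g p) | p <- ps] =
  if f then [seq (k.+1, p) | p <- ps] else [::].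
Proof. elim: ps => [|p ps IH] /=; first by case: f. move: IH; rewrite /clabs /=; by case: f => /= ->. Qed.

Lemma olabs_gen f (lf : nat -> lab) (g : nat -> atom) (ps : seq nat) :
  olabs [seq (f, lf p, g p) | p <- ps] = if f then [::] else [seq lf p | p <- ps].
Proof. elim: ps => [|p ps IH] /=; first by case: f. move: IH; rewrite /olabs /=; by case: f => /= ->. Qed.

Lemma clabs_gen f (lf : nat -> lab) (g : nat -> atom) (ps : seq nat) :
  clabs [seq (f, lf p, g p) | p <- ps] = if f then [seq lf p | p <- ps] else [::].
Proof. elim: ps => [|p ps IH] /=; first by case: f. move: IH; rewrite /clabs /=; by case: f => /= ->. Qed.

Lemma blockS (L : pgoal) o len : o + len <= size L ->
  [seq (nth dpat L (o + j)).1 | j <- iota 0 len] = map fst (take len (drop o L)).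
Proof.
move=> H; rewrite -(map_nth_iota dpat); last by lia.
rewrite -[in RHS](addn0 o) iotaDl -!map_comp; by [].
Qed.

Lemma sdesc0 l m : sdesc 0 l m -> m = l.
Proof. by case. Qed.
Lemma ext_step i E pc GE sE th' b UE : Inv i E pc GE sE th' b UE -> i < size ds ->
  exists s i' E' pc' GE' sE' th'' b' UE',
   [/\ Inv i' E' pc' GE' sE' th'' b' UE',
       [/\ SQ s, is_step s & List.In (st_clause s) P],
       st_goal s = GE /\ st_res s = GE',
       disjoint_vars (rcvars s) UE /\ UE' = UE ++ rcvars s &
       meas i' pc' < meas i pc /\ ((i' = i.+1 /\ st_clause s = cl i) \/ i' = i)].
Proof.
move=> [[Hin HpG] [V1 V3 V4 V5 V6] [[d Hd] V8] [V9 V10E] [U1 U2 U3]] Hi.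
case: E V1 V5 V8 V9 V10E U1 U3 => [|e E1] V1 V5 V8 V9 V10E U1 U3.
  by move: V9; rewrite (front_O Hi).
case: GE V1 HpG => [//|a K] V1 HpG.
have Ha : a.1 = asubst sE e.2 by case: V1.
have HK : map fst K = map (fun e : entry => asubst sE e.2) E1 by case: V1.
set f := e.1.1; set l := e.1.2.
have [k [Hkn Hfk Hkf Hkt]] : exists k, [/\ k < size ds, front k = l,
    (f = false -> k = i /\ olabs E1 = behead (O i)) & (f = true -> k < i)].
  case Ef: f.
    have := V10E 0 erefl Ef l (sd0 _ _); rewrite take0 /olabs /= => -[[k Hk Hkl]|//].
    by exists k; split => //; apply: leq_trans Hk Hin.
  exists i; split => //.
    by move: V9; rewrite olabs_cons_f // (front_O Hi) => -[].
  by move: V9; rewrite olabs_cons_f // (front_O Hi) => -[].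
set c := cl k; set xik := st_ren (stp k).
have Hc : is_clause c by apply: cl_clause.
have HcP : List.In c P by apply: HP; apply: stp_in.
have Hsp := Hspl Hc; set Ms := (spl c).1; set Mq := (spl c).2.
have [HMsq Hbody _] := Hsp.
set M := mv c; set N := maxn b M.
have HMN : M <= N by rewrite leq_maxr.
have HbN : b <= N by rewrite leq_maxl.
set xiE := rensub N M.
have HxiE : renaming xiE by apply: renaming_rensub.
have Hfresh : forall y, y \in cvars (crename xiE c) -> N <= y < N + M by move=> y; apply: rcvars_fresh.
have HGlt := gvars_lt V1 V5 V6.
have Hdisj : disjoint_vars (gvars (a :: K)) (cvars (crename xiE c)).
  by move=> y /HGlt Hy /Hfresh /andP [Hy' _]; move: (leq_trans HbN Hy'); rewrite leqNgt Hy.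
set eta := fun y => if (N <= y) && (y < N + M) then tsubst theta (xik (y - N)) else d y.
have HxiEv : forall v, v \in cvars c -> xiE v = Var (v + N) by move=> v /mv_gt; apply: rensub_lt.
have Hren_gen : forall g : subst, (forall y, (N <= y) && (y < N + M) -> g y = tsubst theta (xik (y - N))) ->
    forall b0, (forall v, v \in avars b0 -> v \in cvars c) ->
    asubst g (asubst xiE b0) = asubst theta (asubst xik b0).
  move=> g Hg b0 Hb0; rewrite !asubst_comp; apply: asubst_ext => v Hv.
  have Hv' := mv_gt (Hb0 v Hv); rewrite HxiEv ?Hb0 //= Hg; first by rewrite addnK.
  by apply/andP; split; lia.
have Heta_blk : forall y, (N <= y) && (y < N + M) -> eta y = tsubst theta (xik (y - N)).
  by move=> y Hy; rewrite /eta Hy.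
have Hren := Hren_gen eta Heta_blk.
have Hunif : unifier eta a.1 (asubst xiE (chead c)).
  rewrite /unifier Hren; last by move=> v Hv; rewrite /cvars mem_cat Hv.
  rewrite -eqn_front // Hfk -(V8 e); last by left.
  rewrite Ha asubst_comp; apply: asubst_ext => x Hx; rewrite Hd; apply: tsubst_ext => y Hy.
  have Hyb : y < b by apply: (V6 x) => //; apply: (V5 e) => //; left.
  rewrite /eta; have -> : (N <= y) = false by apply/negbTE; rewrite -ltnNge; apply: leq_trans Hyb HbN.
  by [].
have [mu Hmu] := mgu_exists Hunif.
have [s [HSQs Hs Hgs Hcs [Hrs Hms]]] := sq_step HSQall erefl HpG Hc HxiE Hdisj Hmu.
have [Hres HpR] := sq_res Hsp HSQs Hcs Hgs.
rewrite Hrs Hms in Hres.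
have Hrc : rcvars s = cvars (crename xiE c) by rewrite /rcvars Hrs Hcs.
have Ha_lt : forall y, y \in avars a.1 -> y < b.
  by move=> y Hy; apply: HGlt; rewrite /gvars /= mem_cat Hy.
have Hh_lt : forall y, y \in avars (asubst xiE (chead c)) -> N <= y < N + M.
  by move=> y Hy; apply: Hfresh; rewrite /cvars mem_cat Hy.
have Hmu_rel : forall x, mu x <> Var x -> x < N + M /\ forall y, y \in tvars (mu x) -> y < N + M.
  have [_ _ _ Hrel] := Hmu.
  have Hab : forall z, z \in avars a.1 ++ avars (asubst xiE (chead c)) -> z < N + M.
    move=> z; rewrite mem_cat => /orP [/Ha_lt H|/Hh_lt /andP [_ H] //].
    by apply: (leq_trans H); apply: leq_trans HbN (leq_addr _ _).
  by move=> x /Hrel [H1 H2]; split; [apply: Hab | move=> y /H2; apply: Hab].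
have Hsize_body : size (cbody c) = ms k + mq k by rewrite Hbody size_cat.
have Hkid_fresh : forall p y, p < size (cbody c) -> y \in avars (asubst xiE (nth dpat (cbody c) p).1) ->
    N <= y < N + M.
  by move=> p y Hp Hy; apply: Hfresh; apply: nth_body_vars Hp Hy.
set KS := [seq (f, (k.+1, p), asubst xiE (nth dpat (cbody (cl k)) p).1) | p <- iota 0 (ms k)] : seq entry.
set KQ := [seq (f, (k.+1, p), asubst xiE (nth dpat (cbody (cl k)) p).1) | p <- iota (ms k) (mq k)] : seq entry.
have HKSin : forall x, List.In x KS -> exists p, [/\ p < ms k & x = (f, (k.+1, p), asubst xiE (nth dpat (cbody c) p).1)].
  by move=> x /kids_prop [p [/andP [_ Hp] ->]]; exists p.
have HKQin : forall x, List.In x KQ -> exists p, [/\ ms k <= p < ms k + mq k & x = (f, (k.+1, p), asubst xiE (nth dpat (cbody c) p).1)].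
  by move=> x /kids_prop [p [Hp ->]]; exists p.
have Hkidin : forall x, List.In x (KS ++ KQ) -> exists p, [/\ p < size (cbody c) & x = (f, (k.+1, p), asubst xiE (nth dpat (cbody c) p).1)].
  move=> x /List.in_app_iff [/HKSin [p [Hp ->]]|/HKQin [p [/andP [_ Hp] ->]]]; exists p; split => //.
    by rewrite Hsize_body; apply: leq_trans Hp (leq_addr _ _).
  by rewrite Hsize_body.
set sE' := fun x => tsubst mu (sE x).
set th'' := fun y => if (N <= y) && (y < N + M) then tsubst theta (xik (y - N)) else th' y.
have Hfix_sE : forall b0, (forall y, y \in avars b0 -> b <= y) -> asubst sE b0 = b0.
  move=> b0 Hb0; rewrite -[RHS]asubst_id; apply: asubst_ext => y Hy; exact: V4 (Hb0 y Hy).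
have HrcN : forall y, y \in rcvars s -> N <= y < N + M by move=> y; rewrite Hrc; apply: Hfresh.
have Hpc_old : f = true /\ uniq (l :: clabs E1 ++ pc) /\ (forall l' k', l' \in l :: clabs E1 ++ pc -> l'.1 = k'.+1 -> front k' \in pc)
    \/ (f = false /\ clabs (e :: E1) = clabs E1).
  case Ef: f; last by right; split => //; rewrite /clabs /= -/f Ef.
  left; have Hc1 : clabs (e :: E1) = l :: clabs E1 by rewrite /clabs /= -/f Ef.
  by rewrite Hc1 in U1 U3; split => //; split.
exists s, (if f then i else i.+1), (KS ++ E1 ++ KQ), (if f then l :: pc else pc), (st_res s), sE', th'', (N + M), (UE ++ rcvars s).
split.
- split.
  + split; [by case: (f); lia | exact: HpR].
  + split.
    * rewrite Hres !map_cat; congr (_ ++ _ ++ _).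
      -- have [E1' _] := map_nth_body Ms Mq xiE.
         rewrite -E1' -Hbody -map_comp -!map_comp; apply: eq_in_map' => p /In_mem; rewrite mem_iota /= => Hp.
         rewrite /= -/sE' /sE' -asubst_comp Hfix_sE // => y /(Hkid_fresh p y) H.
         have /andP [H1 _] : N <= y < N + M by apply: H; rewrite Hsize_body; apply: leq_trans Hp (leq_addr _ _).
         exact: leq_trans HbN H1.
      -- rewrite HK -!map_comp; apply: eq_map => e' /=; by rewrite asubst_comp.
      -- have [_ E2'] := map_nth_body Ms Mq xiE.
         rewrite -E2' -Hbody -map_comp -!map_comp; apply: eq_in_map' => p /In_mem; rewrite mem_iota /= => Hp.
         rewrite /= -/sE' /sE' -asubst_comp Hfix_sE // => y /(Hkid_fresh p y) H.
         have /andP [H1 _] : N <= y < N + M by apply: H; rewrite Hsize_body; case/andP: Hp.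
         exact: leq_trans HbN H1.
    * move=> y; rewrite mem_cat => /orP [/V3 H|/HrcN /andP [_ //]].
      by apply: leq_trans H _; apply: leq_trans HbN (leq_addr _ _).
    * move=> x Hx; rewrite /sE' V4 /=; last by apply: leq_trans Hx; apply: leq_trans HbN (leq_addr _ _).
      case: (classic (mu x = Var x)) => // /Hmu_rel [H _]; by move: H; rewrite ltnNge Hx.
    * move=> e' He' y Hy.
      have [[p [Hp Ee]]|HE1] : (exists p, p < size (cbody c) /\ e' = (f, (k.+1, p), asubst xiE (nth dpat (cbody c) p).1)) \/ List.In e' E1.
        move: He' => /List.in_app_iff [H|/List.in_app_iff [H|H]].
        - by left; apply: Hkidin; apply: List.in_or_app; left.
        - by right.
        - by left; apply: Hkidin; apply: List.in_or_app; right.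
        by move: Hy; rewrite Ee /= => /(Hkid_fresh p y Hp) /andP [_ ->].
      have := V5 e' (or_intror HE1) y Hy => H.
      by apply: leq_trans H _; apply: leq_trans HbN (leq_addr _ _).
    * move=> x Hx y; rewrite /sE' => /tvars_subst [z Hz Hy].
      have Hz' : z < N + M.
        case: (ltnP x b) => Hxb; first by have := V6 x Hxb z Hz; lia.
        by move: Hz; rewrite V4 // inE => /eqP ->.
      case: (classic (mu z = Var z)) => [Ez|/Hmu_rel [_ /(_ y Hy) //]].
      by move: Hy; rewrite Ez inE => /eqP ->.
  + have Hth_blk : forall y, (N <= y) && (y < N + M) -> th'' y = tsubst theta (xik (y - N)).
      by move=> y Hy; rewrite /th'' Hy.
    split.
    * have [_ Hgen _ _] := Hmu; have [d' Hd'] := Hgen eta Hunif.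
      exists d' => x; rewrite /sE' tsubst_comp (tsubst_ext (s2 := eta)) => [|z _]; last by rewrite Hd'.
      rewrite /th''; case: ifP => Hx.
        move: (Hx) => /andP [Hx1 _]; rewrite V4 /=; last exact: leq_trans HbN Hx1.
        by rewrite /eta Hx.
      rewrite Hd; case: (ltnP x b) => Hxb.
        apply: tsubst_ext => y Hy; have Hyb := V6 x Hxb y Hy.
        rewrite /eta; have -> : (N <= y) = false by apply/negbTE; rewrite -ltnNge; apply: leq_trans Hyb HbN.
        by [].
      by rewrite V4 //= /eta Hx.
    * move=> e' He'.
      have [[p [Hp Ee]]|HE1] : (exists p, p < size (cbody c) /\ e' = (f, (k.+1, p), asubst xiE (nth dpat (cbody c) p).1)) \/ List.In e' E1.
        move: He' => /List.in_app_iff [H|/List.in_app_iff [H|H]].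
        - by left; apply: Hkidin; apply: List.in_or_app; left.
        - by right.
        - by left; apply: Hkidin; apply: List.in_or_app; right.
        rewrite Ee /= (Hren_gen th'' Hth_blk) //.
        by move=> v Hv; apply: (kid_in Hp Hv).
      rewrite -(V8 e' (or_intror HE1)); apply: asubst_ext => y Hy.
      have Hyb := V5 e' (or_intror HE1) y Hy.
      rewrite /th''; have -> : (N <= y) = false by apply/negbTE; rewrite -ltnNge; apply: leq_trans Hyb HbN.
      by [].
  + split.
    * rewrite /KS /KQ !olabs_cat !olabs_kids.
      case Ef: f Hkf Hkt => Hkf Hkt.
        by move: V9; rewrite olabs_cons_t // cats0.
      by have [Eki Hol] := Hkf erefl; subst k; rewrite Hol.
    * have [Ef|Ef] : f = true \/ f = false by case: (f); [left|right].
        rewrite Ef; apply: (V10_copy (k := k) Hin (Hkt Ef) Hfk Ef V10E).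
        - by move=> x /HKSin [p [Hp ->]]; split => //; exists p.
        - by move=> x /HKQin [p [/andP [_ Hp] ->]]; split => //; exists p.
        - by move: V9; rewrite olabs_cons_t.
      have [Eki Hol] := Hkf Ef; subst k.
      rewrite Ef; apply: (V10_orig V10E Ef (esym Hfk)).
      - by move=> x /HKSin [p [Hp ->]].
      - by move=> x /HKQin [p [Hp ->]].
      - by rewrite /KS olabs_kids Ef.
  + rewrite /KS /KQ !clabs_cat !clabs_kids.
    case Ef: f Hpc_old Hkf Hkt => Hpc_old Hkf Hkt.
      have [[_ [Hu Hpar]]|[//]] := Hpc_old.
      set KL := [seq (k.+1, p) | p <- iota 0 (ms k)] ++ [seq (k.+1, p) | p <- iota (ms k) (mq k)].
      have HKL : forall x, x \in KL -> x.1 = k.+1.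
        by move=> x; rewrite mem_cat => /orP [] /mapP [p _ ->].
      have Hperm : perm_eq ([seq (k.+1, p) | p <- iota 0 (ms k)] ++ clabs E1 ++ [seq (k.+1, p) | p <- iota (ms k) (mq k)] ++ l :: pc)
                           (KL ++ (l :: clabs E1 ++ pc)).
        apply/permP => pr; rewrite /KL !count_cat /= !count_cat; lia.
      split.
      * rewrite -!catA (perm_uniq Hperm) cat_uniq Hu andbT; apply/andP; split.
          rewrite /KL -map_cat -iotaD map_inj_uniq ?iota_uniq //.
          by move=> x y [].
        apply/hasPn => x Hx; apply/negP => /HKL Hx1.
        have := Hpar x k Hx Hx1; rewrite Hfk => Hlpc.
        by move: Hu; rewrite /= mem_cat Hlpc orbT.
      * move=> l'; rewrite inE => /orP [/eqP ->|/U2 //]; exists k => //; exact: Hkt.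
      * move=> x k'; rewrite -!catA (perm_mem Hperm) mem_cat => /orP [/HKL -> [<-]|Hx Hx1].
          by rewrite Hfk inE eqxx.
        by rewrite inE (Hpar x k' Hx Hx1) orbT.
    have [[//]|[_ Hc1]] := Hpc_old.
    rewrite /= cats0; rewrite Hc1 in U1 U3; split => //.
    by move=> l' /U2 /resolved_S.
- by split => //; rewrite Hcs.
- by split.
- split => // y Hy Hu; have := HrcN y Hy; have := V3 y Hu; lia.
- case Ef: f Hpc_old Hkf Hkt => Hpc_old Hkf Hkt.
    split; last by right.
    have [[_ [Hu _]]|[//]] := Hpc_old.
    have Hb : size (l :: pc) <= size ds.
      apply: (pc_bound Hin).
        by move: Hu; rewrite /= mem_cat negb_or cat_uniq => /andP [/andP [_ ->] /and3P [_ _ ->]].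
      move=> l'; rewrite inE => /orP [/eqP ->|/U2 //]; exists k => //; exact: Hkt.
    rewrite /meas /=; move: Hb => /= Hb; lia.
  have [Eki _] := Hkf erefl; subst k.
  split; last by left; split => //; rewrite Hcs.
  rewrite /meas; have -> : size ds - i = (size ds - i.+1).+1 by lia.
  rewrite mulSn; set t := (_ * _); lia.
Qed.

Lemma ext_finish i E pc GE sE th' b UE : Inv i E pc GE sE th' b UE -> size ds <= i ->
  size Q <= size GE.
Proof.
move=> [[Hin _] [V1 _ _ _ _] _ [V9 _] _] Hi.
have Ei : i = size ds by apply/eqP; rewrite eqn_leq Hin Hi.
subst i; rewrite -gl_n -size_O // -V9 -(size_map fst GE) V1 size_map /olabs size_map.
by rewrite size_filter count_size.
Qed.

Lemma ext_main m : forall i E pc GE sE th' b UE, meas i pc <= m -> Inv i E pc GE sE th' b UE ->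
  exists dsE R, [/\ chain GE dsE R,
     (forall s, List.In s dsE -> [/\ is_step s, SQ s & List.In (st_clause s) P]),
     apart UE dsE,
     subseqL (drop i (map st_clause ds)) (map st_clause dsE) &
     size Q <= size R].
Proof.
have Hfin : forall i E pc GE sE th' b UE, Inv i E pc GE sE th' b UE -> size ds <= i ->
  exists dsE R, [/\ chain GE dsE R,
     (forall s, List.In s dsE -> [/\ is_step s, SQ s & List.In (st_clause s) P]),
     apart UE dsE,
     subseqL (drop i (map st_clause ds)) (map st_clause dsE) &
     size Q <= size R].
  move=> i E pc GE sE th' b UE HI Hi; exists [::], GE; split => //.
  - by exists [::]; rewrite drop_oversize // size_map.
  - exact: ext_finish HI Hi.
elim: m => [|m IH] i E pc GE sE th' b UE Hm HI; case: (ltnP i (size ds)) => Hi; try exact: Hfin HI Hi.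
  by move: Hm; rewrite /meas leqn0 addn_eq0 muln_eq0 => /andP [/orP [|//]]; rewrite subn_eq0 leqNgt Hi.
have [s [i' [E' [pc' [GE' [sE' [th'' [b' [UE' [HI' [HSQ' Hs' HP'] [Hg Hr] [Hd HU] [Hmeas Hcl]]]]]]]]]]] := ext_step HI Hi.
have Hm' : meas i' pc' <= m by rewrite -ltnS; exact: leq_trans Hmeas Hm.
have [dsE [R [H1 H2 H3 H4 H5]]] := IH i' E' pc' GE' sE' th'' b' UE' Hm' HI'.
exists (s :: dsE), R; split => //.
- by rewrite /= Hg Hr.
- by move=> s' /= [<-|/H2].
- by rewrite /= -HU.
- case: H4 => m0 Hm0; case: Hcl => [[Ei Ec]|Ei]; subst i'.
    rewrite (drop_nth (st_clause dstep)) ?size_map // (nth_map dstep) //.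
    by exists (true :: m0); rewrite /= -Hm0 Ec.
  by exists (false :: m0); rewrite /= Hm0.
Qed.

Definition E0 (a b c d : nat) : seq entry :=
  [seq (false, (0, j), (nth dpat G0 (0 + j)).1) | j <- iota 0 (a + b + c)] ++
  [seq (true, (0, a + j), (nth dpat G0 (a + j)).1) | j <- iota 0 b] ++
  [seq (false, (0, a + b + c + j), (nth dpat G0 (a + b + c + j)).1) | j <- iota 0 d].

Lemma init_inv (A B C D : pgoal) (pi : rat -> rat) :
  G0 = A ++ B ++ C ++ D -> is_pgoal (A ++ B ++ C ++ gshift pi B ++ D) ->
  Inv 0 (E0 (size A) (size B) (size C) (size D)) [::] (A ++ B ++ C ++ gshift pi B ++ D) Var theta
     (foldr maxn 0 (gvars (A ++ B ++ C ++ gshift pi B ++ D))).+1 (gvars (A ++ B ++ C ++ gshift pi B ++ D)).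
Proof.
move=> HG0 HG1.
set G1 := A ++ B ++ C ++ gshift pi B ++ D.
set a := size A; set b := size B; set c := size C; set d := size D.
have HsG0 : size G0 = a + b + c + d by rewrite HG0 !size_cat !addnA.
have HV1 : map fst G1 = map (fun e : entry => asubst Var e.2) (E0 a b c d).
  rewrite (eq_map (g := fun e : entry => e.2)); last by move=> e; rewrite asubst_id.
  rewrite /E0 !map_cat -!map_comp /comp /=.
  rewrite !blockS; try by rewrite HsG0; lia.
  rewrite HG0 drop0.
  have -> : take (a + b + c) (A ++ B ++ C ++ D) = A ++ B ++ C.
    by rewrite !catA take_size_cat // !size_cat.
  have -> : take b (drop a (A ++ B ++ C ++ D)) = B.
    by rewrite drop_size_cat // take_size_cat.
  have -> : take d (drop (a + b + c) (A ++ B ++ C ++ D)) = D.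
    by rewrite !catA drop_size_cat ?take_size // !size_cat.
  by rewrite !map_cat !catA.
have HinG1 : forall e : entry, List.In e (E0 a b c d) -> List.In e.2 (map fst G1).
  move=> e He; rewrite HV1; apply/List.in_map_iff; exists e; split => //; exact: asubst_id.
have Hb0 : forall y, y \in gvars G1 -> y < (foldr maxn 0 (gvars G1)).+1.
  move=> y; rewrite ltnS; elim: (gvars G1) => //= x s IH; rewrite inE => /orP [/eqP ->|/IH H].
    by rewrite leq_maxl.
  by rewrite (leq_trans H) // leq_maxr.
split.
- by split.
- split => //.
  + move=> e He y Hy; apply: Hb0; rewrite gvars_avs; exact: avsP2 (HinG1 e He) Hy.
  + by move=> x Hx y; rewrite inE => /eqP ->.
- split; first by exists theta => x.
  move=> e /List.in_app_iff [|/List.in_app_iff []] /List.in_map_iff [j [<- _]] //.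
- split.
  + rewrite /E0 !olabs_cat !olabs_gen /= HsG0 [in RHS]iotaD [in RHS]map_cat; congr (_ ++ _).
    by rewrite [in RHS]add0n -[in RHS](addn0 (a + b + c)) [in RHS]iotaDl -map_comp.
  + move=> q Hq Hfl m Hm.
    case: (pos3 Hq) => [[Hq1 [En Et]]|[q1 Eq [Hq1 [En Et]]]|[q2 Eq [En Et]]].
    * move: Hq1; rewrite size_map => Hq1.
      by move: Hfl; rewrite En (nth_map 0).
    * move: (Hq1); rewrite size_map => Hq1'.
      move: Hfl Hm; rewrite En (nth_map 0) // nth_iota; last by rewrite size_iota in Hq1'.
      rewrite add0n /= => _ /sdesc0 ->.
      right; rewrite Et olabs_cat mem_cat olabs_gen; apply/orP; left.
      apply/mapP; exists (a + q1) => //; rewrite mem_iota /=.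
      by move: Hq1; rewrite size_map size_iota => H; lia.
    * case: (ltnP q2 d) => Hq2; first by move: Hfl; rewrite En (nth_map 0) ?size_iota.
      by move: Hfl; rewrite En nth_default // size_map size_iota.
- rewrite cats0 /E0 !clabs_cat !clabs_gen /= cats0; split => //.
  + rewrite map_inj_uniq ?iota_uniq //; by move=> x y [] /addnI.
  + by move=> l k /mapP [j _ ->].
Qed.
End Orig.

Theorem theoremt4p3p1 (P : seq clause) (SQ : pstep -> Prop)
    (A B C D : pgoal) (pi : rat -> rat) (X : seq clause) (Q : pgoal) :
  (forall c, List.In c P -> is_clause c) ->
  stack_queue SQ ->
  shifting pi ->
  is_pgoal (A ++ B ++ C ++ D) ->
  is_pgoal (A ++ B ++ C ++ gshift pi B ++ D) ->
  pderiv SQ P (A ++ B ++ C ++ D) X Q ->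
  exists (Y : seq clause) (R : pgoal),
    [/\ pderiv SQ P (A ++ B ++ C ++ gshift pi B ++ D) Y R,
        subseqL X Y &
        (size Q <= size R)%N].
Proof.
move=> HPc Hsq Hpi HG0 HG1 [ds [Hchain [HX [Hst [HSQ [HP Hap]]]]]].
have [spl Hspl] : exists spl : clause -> pgoal * pgoal,
    forall c, is_clause c -> sq_split SQ c (spl c).1 (spl c).2.
  apply: (ClassicalEpsilon.choice (fun c (pr : pgoal * pgoal) => is_clause c -> sq_split SQ c pr.1 pr.2)).
  move=> c; case: (classic (is_clause c)) => Hc; last by exists ([::], [::]).
  have [Ms [Mq H]] := proj2 Hsq c Hc; by exists (Ms, Mq).
have HI := @init_inv (A ++ B ++ C ++ D) ds spl A B C D pi erefl HG1.
have [dsE [R [H1 H2 H3 H4 H5]]] := ext_main Hspl Hchain Hst HSQ Hap HP Hsq (leqnn _) HI.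
exists (map st_clause dsE), R; split => //.
- exists dsE; split => //; split => //; split; [|split; [|split]] => // s Hs; by have [] := H2 s Hs.
- by rewrite -HX; move: H4; rewrite drop0.
Qed.
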